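(* Let $0<\sigma\le 1$ and let $(u,m)$ be the classical solution of the system \[ \begin{cases} u_t + \frac{\sigma^2}{2} u_{xx} - ru + G(u_x,m)^2 = 0, & 0<t<T,\ 0<x<L,\\ m_t - \frac{\sigma^2}{2} m_{xx} - \{G(u_x,m)m\}_x = 0, & 0<t<T,\ 0<x<L,\\ m(0,x)=m_0(x),\quad u(T,x)=u_T(x), & 0\le x\le L,\\ u_x(t,0)=u_x(t,L)=0, & 0\le t\le T,\\ \frac{\sigma^2}{2} m_x(t,x) + G(u_x,m)m(t,x) = 0, & 0\le t\le T,\ x\in\{0,L\}, \end{cases} \] where $G(u_x,m)(t,x) := \frac12\left(b + c\int_0^L u_x(t,y)m(t,y)\,dy - u_x(t,x)\right)$. Then \[ \sigma^2\left(\int_0^T\!\!\int_0^L \frac{|m_x|^2}{m+1}\,dx\,dt\right)^{1/2}\le C, \] where $C$ does not depend on $\sigma$.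
   Context: Standing setting: $L,T,r>0$ are constants, $\epsilon>0$, and $b=\frac{2}{2+\epsilon}$, $c=\frac{\epsilon}{2+\epsilon}$. The data satisfy: $u_T,m_0\in C^{2+\gamma}([0,L])$ for some $\gamma>0$; $u_T'(0)=u_T'(L)=0$ and $m_0(0)=m_0'(0)=m_0(L)=m_0'(L)=0$; $m_0$ is a probability density on $[0,L]$; $u_T\ge 0$. Constants may depend on $u_T,m_0,L,T,r,\epsilon$ but not on $\sigma\in(0,1]$. *)

(* Defs.v *)
From Stdlib Require Import Reals.
From Coquelicot Require Export Coquelicot.
Open Scope R_scope.

Definition Icl (L x : R) : Prop := 0 <= x <= L.
Definition Iop (L x : R) : Prop := 0 < x < L.

Definition Rcl (T L : R) (p : R * R) : Prop := Icl T (fst p) /\ Icl L (snd p).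
Definition Rop (T L : R) (p : R * R) : Prop := Iop T (fst p) /\ Iop L (snd p).

Definition uncurry2 (f : R -> R -> R) : R * R -> R := fun p => f (fst p) (snd p).

(* f belongs to C^{2+gamma}([0,L]): f, f', f'' continuous on [0,L]
   (f', f'' being the derivatives on (0,L), extended continuously to [0,L]),
   and f'' is gamma-Hoelder on [0,L].  d1, d2 are f', f''. *)
Definition C2g (L gamma : R) (f d1 d2 : R -> R) : Prop :=
  continuous_on (Icl L) f /\ continuous_on (Icl L) d1 /\ continuous_on (Icl L) d2 /\
  (forall x, Iop L x -> is_derive f x (d1 x)) /\
  (forall x, Iop L x -> is_derive d1 x (d2 x)) /\
  exists K, forall x y, Icl L x -> Icl L y ->
    Rabs (d2 x - d2 y) <= K * Rpower (Rabs (x - y)) gamma.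

Definition Gfun (b c L : R) (ux m : R -> R -> R) (t x : R) : R :=
  / 2 * (b + c * RInt (fun y => ux t y * m t y) 0 L - ux t x).

(* (u, m) is a classical solution of the MFG system; ut, ux, uxx, mt, mx, mxx
   are its partial derivatives (on the interior, extended by continuity). *)
Definition classical_solution (sigma r b c T L : R) (uT m0 : R -> R)
    (u ut ux uxx m mt mx mxx : R -> R -> R) : Prop :=
  continuous_on (Rcl T L) (uncurry2 u) /\ continuous_on (Rcl T L) (uncurry2 m) /\
  continuous_on (Rcl T L) (uncurry2 ux) /\ continuous_on (Rcl T L) (uncurry2 mx) /\
  continuous_on (Rop T L) (uncurry2 ut) /\ continuous_on (Rop T L) (uncurry2 uxx) /\
  continuous_on (Rop T L) (uncurry2 mt) /\ continuous_on (Rop T L) (uncurry2 mxx) /\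
  (forall t x, Icl T t -> Iop L x ->
     is_derive (fun y => u t y) x (ux t x) /\ is_derive (fun y => m t y) x (mx t x)) /\
  (forall t x, Iop T t -> Iop L x ->
     is_derive (fun s => u s x) t (ut t x) /\ is_derive (fun s => m s x) t (mt t x) /\
     is_derive (fun y => ux t y) x (uxx t x) /\ is_derive (fun y => mx t y) x (mxx t x)) /\
  (forall t x, Iop T t -> Iop L x ->
     ut t x + sigma ^ 2 / 2 * uxx t x - r * u t x + (Gfun b c L ux m t x) ^ 2 = 0) /\
  (forall t x, Iop T t -> Iop L x ->
     is_derive (fun y => Gfun b c L ux m t y * m t y) x
       (mt t x - sigma ^ 2 / 2 * mxx t x)) /\
  (forall x, Icl L x -> m 0 x = m0 x /\ u T x = uT x) /\
  (forall t, Icl T t -> ux t 0 = 0 /\ ux t L = 0) /\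
  (forall t x, Icl T t -> (x = 0 \/ x = L) ->
     sigma ^ 2 / 2 * mx t x + Gfun b c L ux m t x * m t x = 0).

(* Main.v *)
Require Import Defs.
From Stdlib Require Import Reals Lra Lia.
From Coquelicot Require Import Coquelicot.
Open Scope R_scope.

Lemma ballR (x e y : R) : ball x e y <-> Rabs (y - x) < e.
Proof. reflexivity. Qed.

Lemma ballR2 (p q : R * R) e : ball p e q <-> (Rabs (fst q - fst p) < e /\ Rabs (snd q - snd p) < e).
Proof. destruct p, q; reflexivity. Qed.

Definition clip (a b x : R) := Rmax a (Rmin b x).

Lemma clip_in a b x : a <= b -> a <= clip a b x <= b.
Proof. intros; unfold clip, Rmax, Rmin; repeat destruct Rle_dec; lra. Qed.

Lemma clip_id a b x : a <= x <= b -> clip a b x = x.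
Proof. intros; unfold clip, Rmax, Rmin; repeat destruct Rle_dec; lra. Qed.

Lemma clip_lip a b x y : a <= b -> Rabs (clip a b x - clip a b y) <= Rabs (x - y).
Proof. intros; unfold clip, Rmax, Rmin; repeat destruct Rle_dec;
 unfold Rabs; repeat destruct Rcase_abs; lra. Qed.

Definition UC (T L : R) (f : R -> R -> R) : Prop :=
  forall eps, 0 < eps -> exists d, 0 < d /\ forall t x t' x',
    Icl T t -> Icl L x -> Icl T t' -> Icl L x' ->
    Rabs (t - t') < d -> Rabs (x - x') < d -> Rabs (f t x - f t' x') < eps.

Lemma cont_UC T L f : 0 < T -> 0 < L ->
  continuous_on (Rcl T L) (uncurry2 f) -> UC T L f.
Proof.
intros HT HL Hc eps Heps.
set (g := fun t x => f (clip 0 T t) (clip 0 L x)).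
assert (Hg : forall t x, 0 <= t <= T -> 0 <= x <= L -> continuity_2d_pt g t x).
{ intros t x Ht Hx e.
  assert (Hr : Rcl T L (t, x)) by (split; simpl; unfold Icl; lra).
  specialize (Hc _ Hr).
  apply filterlim_locally with (eps := e) in Hc.
  destruct Hc as [d Hd].
  exists d; intros u v Hu Hv.
  unfold g. rewrite (clip_id 0 T t) by lra. rewrite (clip_id 0 L x) by lra.
  assert (Hr' : Rcl T L (clip 0 T u, clip 0 L v)).
  { split; simpl; unfold Icl; apply clip_in; lra. }
  specialize (Hd (clip 0 T u, clip 0 L v)).
  apply Hd in Hr'.
  - apply ballR in Hr'. exact Hr'.
  - apply ballR2; simpl. split.
    + pose proof (clip_lip 0 T u t ltac:(lra)) as W. rewrite (clip_id 0 T t) in W by lra. lra.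
    + pose proof (clip_lip 0 L v x ltac:(lra)) as W. rewrite (clip_id 0 L x) in W by lra. lra. }
destruct (uniform_continuity_2d g 0 T 0 L Hg (mkposreal eps Heps)) as [d Hd].
exists d; split; [apply cond_pos|].
intros t x t' x' Ht Hx Ht' Hx' H1 H2.
unfold Icl in *.
specialize (Hd t' x' t x Ht' Hx' Ht Hx).
unfold g in Hd. rewrite !clip_id in Hd by lra.
apply Hd; assumption.
Qed.

Lemma UC_bound T L f : 0 < T -> 0 < L -> UC T L f ->
  exists M, forall t x, Icl T t -> Icl L x -> Rabs (f t x) <= M.
Proof.
intros HT HL H. destruct (H 1 Rlt_0_1) as [d [Hd Hf]].
destruct (INR_unbounded ((T+L)/d)) as [n Hn].
assert (HN : 0 < INR n).
{ assert (0 < (T+L)/d) by (apply Rdiv_lt_0_compat; lra). lra. }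
assert (HTd : T / INR n < d /\ L / INR n < d).
{ apply Rgt_lt in Hn. apply (Rmult_lt_compat_r d) in Hn; auto.
  unfold Rdiv in Hn. rewrite Rmult_assoc, Rinv_l, Rmult_1_r in Hn by lra.
  split; apply (Rmult_lt_reg_r (INR n)); auto; unfold Rdiv; rewrite Rmult_assoc, Rinv_l by lra; lra. }
exists (Rabs (f 0 0) + INR n). intros t x Ht Hx. unfold Icl in *.
assert (Hc : forall k, (k <= n)%nat ->
  Rabs (f (t * INR k / INR n) (x * INR k / INR n) - f 0 0) <= INR k).
{ induction k as [|k IH]; intros Hk.
  - simpl. unfold Rdiv. rewrite !Rmult_0_r, !Rmult_0_l, Rminus_diag, Rabs_R0. lra.
  - assert (Hk' : (k <= n)%nat) by lia. specialize (IH Hk').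
    assert (Hkn : INR k + 1 <= INR n) by (rewrite <- S_INR; apply le_INR; lia).
    assert (H0k : 0 <= INR k) by apply pos_INR.
    rewrite S_INR.
    assert (Hstep : Rabs (f (t * (INR k + 1) / INR n) (x * (INR k + 1) / INR n)
                      - f (t * INR k / INR n) (x * INR k / INR n)) < 1).
    { apply Hf.
      - split. apply Rmult_le_pos. nra. left; apply Rinv_0_lt_compat; lra.
        apply (Rmult_le_reg_r (INR n)); auto. unfold Rdiv; rewrite Rmult_assoc, Rinv_l by lra. nra.
      - split. apply Rmult_le_pos. nra. left; apply Rinv_0_lt_compat; lra.
        apply (Rmult_le_reg_r (INR n)); auto. unfold Rdiv; rewrite Rmult_assoc, Rinv_l by lra. nra.
      - split. apply Rmult_le_pos. nra. left; apply Rinv_0_lt_compat; lra.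
        apply (Rmult_le_reg_r (INR n)); auto. unfold Rdiv; rewrite Rmult_assoc, Rinv_l by lra. nra.
      - split. apply Rmult_le_pos. nra. left; apply Rinv_0_lt_compat; lra.
        apply (Rmult_le_reg_r (INR n)); auto. unfold Rdiv; rewrite Rmult_assoc, Rinv_l by lra. nra.
      - replace (t * (INR k + 1) / INR n - t * INR k / INR n) with (t / INR n) by (field; lra).
        rewrite Rabs_pos_eq. apply Rle_lt_trans with (T / INR n); [|tauto].
        unfold Rdiv; apply Rmult_le_compat_r; [left; apply Rinv_0_lt_compat|]; lra.
        unfold Rdiv; apply Rmult_le_pos; [|left; apply Rinv_0_lt_compat]; lra.
      - replace (x * (INR k + 1) / INR n - x * INR k / INR n) with (x / INR n) by (field; lra).
        rewrite Rabs_pos_eq. apply Rle_lt_trans with (L / INR n); [|tauto].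
        unfold Rdiv; apply Rmult_le_compat_r; [left; apply Rinv_0_lt_compat|]; lra.
        unfold Rdiv; apply Rmult_le_pos; [|left; apply Rinv_0_lt_compat]; lra. }
    pose proof (Rabs_triang (f (t * (INR k + 1) / INR n) (x * (INR k + 1) / INR n)
                      - f (t * INR k / INR n) (x * INR k / INR n))
                 (f (t * INR k / INR n) (x * INR k / INR n) - f 0 0)) as Tr.
    replace (f (t * (INR k + 1) / INR n) (x * (INR k + 1) / INR n) -
       f (t * INR k / INR n) (x * INR k / INR n) +
       (f (t * INR k / INR n) (x * INR k / INR n) - f 0 0)) with
      (f (t * (INR k + 1) / INR n) (x * (INR k + 1) / INR n) - f 0 0) in Tr by ring.
    lra. }
specialize (Hc n (le_n n)).
replace (t * INR n / INR n) with t in Hc by (field; lra).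
replace (x * INR n / INR n) with x in Hc by (field; lra).
pose proof (Rabs_triang (f t x - f 0 0) (f 0 0)).
replace (f t x - f 0 0 + f 0 0) with (f t x) in H0 by ring. lra.
Qed.


Definition UC1 (a b : R) (h : R -> R) : Prop :=
  forall eps, 0 < eps -> exists d, 0 < d /\ forall s s',
    a <= s <= b -> a <= s' <= b -> Rabs (s - s') < d -> Rabs (h s - h s') < eps.

Lemma UC1_cont_clip a b h : a <= b -> UC1 a b h -> forall z, continuous (fun s => h (clip a b s)) z.
Proof.
intros Hab H z. apply filterlim_locally. intros e.
destruct (H e (cond_pos e)) as [d [Hd Hh]].
exists (mkposreal d Hd). intros y Hy. apply ballR in Hy. apply ballR. simpl in Hy.
apply Hh; try (apply clip_in; lra).
eapply Rle_lt_trans. apply clip_lip; lra. exact Hy.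
Qed.

Lemma UC1_exRInt a b h c d : a <= b -> UC1 a b h -> a <= c <= b -> a <= d <= b -> ex_RInt h c d.
Proof.
intros Hab H Hc Hd.
apply ex_RInt_ext with (fun s => h (clip a b s)).
- intros x Hx. rewrite clip_id; auto.
  unfold Rmin, Rmax in Hx; destruct Rle_dec; lra.
- apply (ex_RInt_continuous (V := R_CompleteNormedModule)). intros; apply UC1_cont_clip; auto.
Qed.

Lemma UC_sec_x T L f t : UC T L f -> Icl T t -> UC1 0 L (f t).
Proof.
intros H Ht e He. destruct (H e He) as [d [Hd Hf]]. exists d; split; auto.
intros s s' Hs Hs' Hss. apply Hf; auto. rewrite Rminus_diag, Rabs_R0; auto.
Qed.

Lemma UC_sec_t T L f x : UC T L f -> Icl L x -> UC1 0 T (fun s => f s x).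
Proof.
intros H Hx e He. destruct (H e He) as [d [Hd Hf]]. exists d; split; auto.
intros s s' Hs Hs' Hss. apply Hf; auto. rewrite Rminus_diag, Rabs_R0; auto.
Qed.

Lemma RInt_abs_bound h c d M : ex_RInt h c d ->
  (forall s, Rmin c d <= s <= Rmax c d -> Rabs (h s) <= M) ->
  Rabs (RInt h c d) <= Rabs (d - c) * M.
Proof.
intros Hi Hb. destruct (Rle_dec c d) as [Hcd|Hcd].
- rewrite (Rabs_pos_eq (d - c)) by lra. apply abs_RInt_le_const; auto.
  intros s Hs; apply Hb. unfold Rmin, Rmax; destruct Rle_dec; lra.
- rewrite <- (opp_RInt_swap (V := R_CompleteNormedModule)) by (apply ex_RInt_swap; auto).
  rewrite (Rabs_left1 (d - c)) by (apply Rnot_le_lt in Hcd; lra).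
  unfold opp; simpl. rewrite Rabs_Ropp.
  replace (- (d - c)) with (c - d) by ring.
  apply abs_RInt_le_const; [lra| apply ex_RInt_swap; auto|].
  intros s Hs; apply Hb. unfold Rmin, Rmax; destruct Rle_dec; lra.
Qed.

Lemma UC_exRInt T L f t a b : UC T L f -> Icl T t -> 0 <= a <= L -> 0 <= b <= L -> 0 < L ->
  ex_RInt (f t) a b.
Proof. intros. apply (UC1_exRInt 0 L); auto; try lra. apply (UC_sec_x T); auto. Qed.

Lemma UC_RInt_UC1 T L f a b : 0 < L -> UC T L f -> 0 <= a <= b -> b <= L ->
  UC1 0 T (fun t => RInt (f t) a b).
Proof.
intros HL H Hab HbL e He.
destruct (H (e / (2 * (L + 1)))) as [d [Hd Hf]].
{ apply Rdiv_lt_0_compat; lra. }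
exists d; split; auto. intros s s' Hs Hs' Hss.
assert (E1 : ex_RInt (f s) a b) by (apply (UC_exRInt T L); unfold Icl; auto; lra).
assert (E2 : ex_RInt (f s') a b) by (apply (UC_exRInt T L); unfold Icl; auto; lra).
assert (Hm : RInt (f s) a b - RInt (f s') a b = RInt (fun x => f s x - f s' x) a b).
{ symmetry. apply (RInt_minus (V := R_CompleteNormedModule)); auto. }
rewrite Hm.
eapply Rle_lt_trans.
apply abs_RInt_le_const with (M := e / (2 * (L + 1))); [lra| |].
{ apply (ex_RInt_minus (V := R_NormedModule)); auto. }
{ intros x Hx. left. apply Hf; unfold Icl; auto; try lra.
  rewrite Rminus_diag, Rabs_R0; auto. }
apply Rle_lt_trans with (L * (e / (2 * (L + 1)))).
apply Rmult_le_compat_r. left; apply Rdiv_lt_0_compat; lra. lra.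
replace (L * (e / (2 * (L + 1)))) with (e * (L / (2 * (L+1)))) by (field; lra).
assert (L / (2 * (L+1)) < 1).
{ apply (Rmult_lt_reg_r (2 * (L+1))); [lra|]. unfold Rdiv; rewrite Rmult_assoc, Rinv_l by lra. lra. }
nra.
Qed.


Definition ext T L (f : R -> R -> R) := fun t x => f (clip 0 T t) (clip 0 L x).
Definition CC T L f := forall t x, continuity_2d_pt (ext T L f) t x.

Lemma cont_CC T L f : 0 < T -> 0 < L ->
  continuous_on (Rcl T L) (uncurry2 f) -> CC T L f.
Proof.
intros HT HL Hc t x e.
set (t0 := clip 0 T t). set (x0 := clip 0 L x).
assert (Hr : Rcl T L (t0, x0)) by (split; simpl; unfold Icl; apply clip_in; lra).
specialize (Hc _ Hr).
apply filterlim_locally with (eps := e) in Hc.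
destruct Hc as [d Hd].
exists d; intros u v Hu Hv.
unfold ext. fold t0 x0.
assert (Hr' : Rcl T L (clip 0 T u, clip 0 L v)).
{ split; simpl; unfold Icl; apply clip_in; lra. }
specialize (Hd (clip 0 T u, clip 0 L v)).
apply Hd in Hr'.
- apply ballR in Hr'. exact Hr'.
- apply ballR2; simpl. split.
  + pose proof (clip_lip 0 T u t ltac:(lra)) as W. fold t0 in W. lra.
  + pose proof (clip_lip 0 L v x ltac:(lra)) as W. fold x0 in W. lra.
Qed.

Lemma CC_UC T L f : 0 < T -> 0 < L -> CC T L f -> UC T L f.
Proof.
intros HT HL Hc eps Heps.
destruct (uniform_continuity_2d (ext T L f) 0 T 0 L (fun t x _ _ => Hc t x) (mkposreal eps Heps)) as [d Hd].
exists d; split; [apply cond_pos|].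
intros t x t' x' Ht Hx Ht' Hx' H1 H2.
unfold Icl in *.
specialize (Hd t' x' t x Ht' Hx' Ht Hx).
unfold ext in Hd. rewrite !clip_id in Hd by lra.
apply Hd; assumption.
Qed.

Lemma CC_pt T L f t x : CC T L f -> Rop T L (t, x) -> continuity_2d_pt f t x.
Proof.
intros Hc [Ht Hx]. simpl in Ht, Hx. unfold Iop in *.
apply continuity_2d_pt_ext_loc with (ext T L f); [|apply Hc].
assert (Hd : 0 < Rmin (Rmin t (T - t)) (Rmin x (L - x))).
{ repeat apply Rmin_pos; lra. }
exists (mkposreal _ Hd). intros u v Hu Hv. simpl in Hu, Hv.
unfold ext. 
apply Rabs_def2 in Hu. apply Rabs_def2 in Hv.
pose proof (Rmin_l (Rmin t (T - t)) (Rmin x (L - x))).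
pose proof (Rmin_r (Rmin t (T - t)) (Rmin x (L - x))).
pose proof (Rmin_l t (T - t)). pose proof (Rmin_r t (T - t)).
pose proof (Rmin_l x (L - x)). pose proof (Rmin_r x (L - x)).
rewrite !clip_id by lra. reflexivity.
Qed.

Lemma contop_pt T L f t x : continuous_on (Rop T L) (uncurry2 f) -> Rop T L (t, x) ->
  continuity_2d_pt f t x.
Proof.
intros Hc Hr. pose proof Hr as [Ht Hx]. simpl in Ht, Hx. unfold Iop in *.
intro e. specialize (Hc _ Hr).
apply filterlim_locally with (eps := e) in Hc.
destruct Hc as [d Hd].
assert (Hd' : 0 < Rmin d (Rmin (Rmin t (T - t)) (Rmin x (L - x)))).
{ repeat apply Rmin_pos; try lra. apply cond_pos. }
exists (mkposreal _ Hd'). intros u v Hu Hv. simpl in Hu, Hv.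
pose proof (Rmin_l d (Rmin (Rmin t (T - t)) (Rmin x (L - x)))).
pose proof (Rmin_r d (Rmin (Rmin t (T - t)) (Rmin x (L - x)))).
pose proof (Rmin_l (Rmin t (T - t)) (Rmin x (L - x))).
pose proof (Rmin_r (Rmin t (T - t)) (Rmin x (L - x))).
pose proof (Rmin_l t (T - t)). pose proof (Rmin_r t (T - t)).
pose proof (Rmin_l x (L - x)). pose proof (Rmin_r x (L - x)).
apply Rabs_def2 in Hu. apply Rabs_def2 in Hv.
specialize (Hd (u, v)). apply ballR in Hd. exact Hd.
apply ballR2; simpl; split; apply Rabs_def1; lra.
split; simpl; unfold Iop; lra.
Qed.

Lemma CC_ext T L f g : (forall t x, Icl T t -> Icl L x -> f t x = g t x) -> 0 <= T -> 0 <= L ->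
  CC T L f -> CC T L g.
Proof.
intros He HT HL Hc t x. apply continuity_2d_pt_ext with (ext T L f); [|apply Hc].
intros u v. unfold ext. apply He; unfold Icl; apply clip_in; lra.
Qed.

Lemma CC_plus T L f g : CC T L f -> CC T L g -> CC T L (fun t x => f t x + g t x).
Proof. intros Hf Hg t x. apply continuity_2d_pt_plus; auto. Qed.
Lemma CC_minus T L f g : CC T L f -> CC T L g -> CC T L (fun t x => f t x - g t x).
Proof. intros Hf Hg t x. apply continuity_2d_pt_minus; auto. Qed.
Lemma CC_mult T L f g : CC T L f -> CC T L g -> CC T L (fun t x => f t x * g t x).
Proof. intros Hf Hg t x. apply continuity_2d_pt_mult; auto. Qed.
Lemma CC_const T L c : CC T L (fun _ _ => c).
Proof. intros t x. apply continuity_2d_pt_const. Qed.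
Lemma CC_comp T L (phi : R -> R) f : 0 <= T -> 0 <= L ->
  (forall t x, Icl T t -> Icl L x -> continuity_pt phi (f t x)) ->
  CC T L f -> CC T L (fun t x => phi (f t x)).
Proof.
intros HT HL Hp Hf t x. unfold ext.
apply (continuity_1d_2d_pt_comp phi (ext T L f)); [|apply Hf].
apply Hp; unfold Icl; apply clip_in; lra.
Qed.

Lemma CC_t T L h : 0 < T -> UC1 0 T h -> CC T L (fun t _ => h t).
Proof.
intros HT H t x e. unfold ext.
destruct (H e (cond_pos e)) as [d [Hd Hh]].
exists (mkposreal d Hd). intros u v Hu Hv. simpl in Hu.
apply Hh; try (apply clip_in; lra).
eapply Rle_lt_trans. apply clip_lip; lra. exact Hu.
Qed.

Lemma c2d_t f t x : continuity_2d_pt f t x -> continuous (fun s => f s x) t.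
Proof.
intros H. apply continuity_pt_filterlim. intros e He.
destruct (H (mkposreal e He)) as [d Hd].
exists d. split. apply cond_pos. intros y [_ Hy]. simpl in *. unfold R_dist in *.
apply Hd; auto. rewrite Rminus_diag, Rabs_R0; apply cond_pos.
Qed.

Lemma c2d_x f t x : continuity_2d_pt f t x -> continuous (fun y => f t y) x.
Proof.
intros H. apply continuity_pt_filterlim. intros e He.
destruct (H (mkposreal e He)) as [d Hd].
exists d. split. apply cond_pos. intros y [_ Hy]. simpl in *. unfold R_dist in *.
apply Hd; auto. rewrite Rminus_diag, Rabs_R0; apply cond_pos.
Qed.


Lemma UC1_cont_int T h t : UC1 0 T h -> 0 < t < T -> continuous h t.
Proof.
intros H Ht. apply filterlim_locally. intros e.
destruct (H e (cond_pos e)) as [d [Hd Hh]].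
assert (Hd' : 0 < Rmin d (Rmin t (T - t))) by (repeat apply Rmin_pos; lra).
exists (mkposreal _ Hd'). intros y Hy. apply ballR in Hy. apply ballR. change (Rabs (y - t) < Rmin d (Rmin t (T - t))) in Hy.
pose proof (Rmin_l d (Rmin t (T - t))). pose proof (Rmin_r d (Rmin t (T - t))).
pose proof (Rmin_l t (T - t)). pose proof (Rmin_r t (T - t)).
apply Rabs_def2 in Hy.
apply Hh; try lra. apply Rabs_def1; lra.
Qed.

Lemma L_tail T L f s M a b : 0 < L -> UC T L f -> Icl T s ->
  (forall t x, Icl T t -> Icl L x -> Rabs (f t x) <= M) -> 0 <= a -> a <= b -> b <= L ->
  Rabs (RInt (f s) 0 L - RInt (f s) a b) <= (a + (L - b)) * M.
Proof.
intros HL H Hs HM Ha Hab Hb.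
assert (I1 := UC_exRInt T L f s 0 a H Hs ltac:(lra) ltac:(lra) HL).
assert (I2 := UC_exRInt T L f s a b H Hs ltac:(lra) ltac:(lra) HL).
assert (I3 := UC_exRInt T L f s b L H Hs ltac:(lra) ltac:(lra) HL).
assert (I4 := UC_exRInt T L f s a L H Hs ltac:(lra) ltac:(lra) HL).
pose proof (RInt_Chasles (V := R_CompleteNormedModule) (f s) 0 a L I1 I4) as C1.
pose proof (RInt_Chasles (V := R_CompleteNormedModule) (f s) a b L I2 I3) as C2.
unfold plus in C1, C2; simpl in C1, C2.
rewrite <- C1, <- C2.
replace (RInt (f s) 0 a + (RInt (f s) a b + RInt (f s) b L) - RInt (f s) a b)
  with (RInt (f s) 0 a + RInt (f s) b L) by ring.
eapply Rle_trans. apply Rabs_triang.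
assert (B1 : Rabs (RInt (f s) 0 a) <= (a - 0) * M).
{ apply abs_RInt_le_const; auto. intros; apply HM; unfold Icl in *; auto; lra. }
assert (B2 : Rabs (RInt (f s) b L) <= (L - b) * M).
{ apply abs_RInt_le_const; auto. intros; apply HM; unfold Icl in *; auto; lra. }
lra.
Qed.

Lemma zero_of_small D K : 0 <= K -> (forall eps, 0 < eps -> Rabs D <= eps * K) -> D = 0.
Proof.
intros HK H. destruct (Req_dec D 0) as [|Hn]; auto. exfalso.
assert (HD : 0 < Rabs D) by (apply Rabs_pos_lt; auto).
specialize (H (Rabs D / (2 * (K + 1))) ltac:(apply Rdiv_lt_0_compat; lra)).
assert (Rabs D / (2 * (K + 1)) * K < Rabs D).
{ replace (Rabs D / (2 * (K + 1)) * K) with (Rabs D * (K / (2 * (K+1)))) by (field; lra).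
  assert (K / (2 * (K+1)) < 1).
  { apply (Rmult_lt_reg_r (2 * (K+1))); [lra|]. unfold Rdiv; rewrite Rmult_assoc, Rinv_l by lra. lra. }
  assert (0 <= K / (2 * (K+1))) by (apply Rmult_le_pos; [lra| left; apply Rinv_0_lt_compat; lra]).
  nra. }
lra.
Qed.

Section Balance.
Variables (T L : R) (E Et F Sg : R -> R -> R).
Hypothesis HT : 0 < T.
Hypothesis HL : 0 < L.
Hypothesis HE : CC T L E.
Hypothesis HF : CC T L F.
Hypothesis HS : CC T L Sg.
Hypothesis HEt : forall t x, Rop T L (t, x) -> continuity_2d_pt Et t x.
Hypothesis HdE : forall t x, Iop T t -> Iop L x -> is_derive (fun s => E s x) t (Et t x).
Hypothesis HdF : forall t x, Iop T t -> Iop L x -> is_derive (fun y => F t y) x (Et t x - Sg t x).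
Hypothesis HF0 : forall t, Icl T t -> F t 0 = 0 /\ F t L = 0.

Let UE := CC_UC T L E HT HL HE.
Let UF := CC_UC T L F HT HL HF.
Let US := CC_UC T L Sg HT HL HS.

Lemma bal_1a a b t : 0 < a -> a <= b -> b < L -> Iop T t ->
  is_derive (fun s => RInt (E s) a b) t (RInt (Et t) a b).
Proof.
intros Ha Hab Hb Ht. unfold Iop in Ht.
assert (Hr : 0 < Rmin t (T - t)) by (apply Rmin_pos; lra).
pose proof (Rmin_l t (T - t)). pose proof (Rmin_r t (T - t)).
assert (Heq : RInt (Et t) a b = RInt (fun x => Derive (fun u => E u x) t) a b).
{ apply RInt_ext. intros x Hx. unfold Rmin, Rmax in Hx; destruct Rle_dec in Hx; try lra.
  symmetry. apply is_derive_unique. apply HdE; unfold Iop; lra. }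
rewrite Heq.
apply (is_derive_RInt_param E a b t).
- exists (mkposreal _ Hr). intros y Hy. apply ballR in Hy. change (Rabs (y - t) < Rmin t (T - t)) in Hy. apply Rabs_def2 in Hy.
  intros x Hx. unfold Rmin, Rmax in Hx; destruct Rle_dec in Hx; try lra.
  eexists. apply HdE; unfold Iop; lra.
- intros x Hx. unfold Rmin, Rmax in Hx; destruct Rle_dec in Hx; try lra.
  apply continuity_2d_pt_ext_loc with Et; [|apply HEt; split; simpl; unfold Iop; lra].
  assert (Hr2 : 0 < Rmin (Rmin t (T - t)) (Rmin x (L - x))) by (repeat apply Rmin_pos; lra).
  exists (mkposreal _ Hr2). intros u v Hu Hv. simpl in Hu, Hv.
  pose proof (Rmin_l (Rmin t (T - t)) (Rmin x (L - x))).
  pose proof (Rmin_r (Rmin t (T - t)) (Rmin x (L - x))).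
  pose proof (Rmin_l x (L - x)). pose proof (Rmin_r x (L - x)).
  apply Rabs_def2 in Hu. apply Rabs_def2 in Hv.
  symmetry. apply is_derive_unique. apply HdE; unfold Iop; lra.
- exists (mkposreal _ Hr). intros y Hy. apply ballR in Hy. change (Rabs (y - t) < Rmin t (T - t)) in Hy. apply Rabs_def2 in Hy.
  apply (UC_exRInt T L); auto; unfold Icl; lra.
Qed.

Lemma bal_1b a b t : 0 < a -> a <= b -> b < L -> Iop T t ->
  RInt (Et t) a b = F t b - F t a + RInt (Sg t) a b.
Proof.
intros Ha Hab Hb Ht.
assert (I1 : is_RInt (fun x => Et t x - Sg t x) a b (F t b - F t a)).
{ apply (is_RInt_derive (V := R_CompleteNormedModule) (fun y => F t y)).
  - intros x Hx. unfold Rmin, Rmax in Hx; destruct Rle_dec in Hx; try lra.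
    apply HdF; auto; unfold Iop; lra.
  - intros x Hx. unfold Rmin, Rmax in Hx; destruct Rle_dec in Hx; try lra.
    apply (c2d_x (fun u v => Et u v - Sg u v)).
    apply continuity_2d_pt_minus. apply HEt; split; simpl; unfold Iop in *; lra.
    apply (CC_pt T L); auto; split; simpl; unfold Iop in *; lra. }
assert (I2 : ex_RInt (Sg t) a b).
{ apply (UC_exRInt T L); auto; unfold Icl, Iop in *; lra. }
rewrite (RInt_ext (Et t) (fun x => (Et t x - Sg t x) + Sg t x)) by (intros x _; simpl; lra).
rewrite (RInt_plus (V := R_CompleteNormedModule) (fun x => Et t x - Sg t x) (Sg t)).
- rewrite (is_RInt_unique _ _ _ _ I1). reflexivity.
- eexists; exact I1.
- exact I2.
Qed.

Lemma bal_1c a b t : 0 < a -> a <= b -> b < L -> Iop T t ->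
  continuous (fun s => F s b - F s a + RInt (Sg s) a b) t.
Proof.
intros Ha Hab Hb Ht. unfold Iop in Ht.
apply (continuous_plus (fun s => F s b - F s a) (fun s => RInt (Sg s) a b)).
apply (continuous_minus (fun s => F s b) (fun s => F s a)).
apply (c2d_t F). apply (CC_pt T L); auto; split; simpl; unfold Iop; lra.
apply (c2d_t F). apply (CC_pt T L); auto; split; simpl; unfold Iop; lra.
apply (UC1_cont_int T). apply (UC_RInt_UC1 T L Sg a b); auto; lra. auto.
Qed.

Lemma bal_1 a b s1 s2 : 0 < a -> a <= b -> b < L -> 0 < s1 -> s1 <= s2 -> s2 < T ->
  RInt (E s2) a b - RInt (E s1) a b = RInt (fun t => F t b - F t a + RInt (Sg t) a b) s1 s2.
Proof.
intros Ha Hab Hb H1 H12 H2.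
symmetry. apply is_RInt_unique.
apply (is_RInt_derive (V := R_CompleteNormedModule) (fun s => RInt (E s) a b)).
- intros t Ht. unfold Rmin, Rmax in Ht; destruct Rle_dec in Ht; try lra.
  rewrite <- bal_1b; auto; unfold Iop; try lra.
  apply bal_1a; auto; unfold Iop; lra.
- intros t Ht. unfold Rmin, Rmax in Ht; destruct Rle_dec in Ht; try lra.
  apply bal_1c; auto; unfold Iop; lra.
Qed.


Lemma balance t1 t2 : 0 <= t1 -> t1 <= t2 -> t2 <= T ->
  RInt (E t2) 0 L - RInt (E t1) 0 L = RInt (fun t => RInt (Sg t) 0 L) t1 t2.
Proof.
intros H1 H12 H2.
destruct (UC_bound T L E HT HL UE) as [ME HME].
destruct (UC_bound T L Sg HT HL US) as [MS HMS].
assert (ME0 : 0 <= ME) by (eapply Rle_trans; [apply Rabs_pos| apply (HME 0 0)]; unfold Icl; lra).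
assert (MS0 : 0 <= MS) by (eapply Rle_trans; [apply Rabs_pos| apply (HMS 0 0)]; unfold Icl; lra).
set (H := fun t => RInt (Sg t) 0 L).
assert (UH : UC1 0 T H) by (apply (UC_RInt_UC1 T L Sg 0 L); auto; lra).
assert (UG : UC1 0 T (fun t => RInt (E t) 0 L)) by (apply (UC_RInt_UC1 T L E 0 L); auto; lra).
assert (HHb : forall t, 0 <= t <= T -> Rabs (H t) <= L * MS).
{ intros t Ht. unfold H. replace (L * MS) with ((L - 0) * MS) by ring.
  apply abs_RInt_le_const; [lra| apply (UC_exRInt T L); auto; unfold Icl; lra|].
  intros; apply HMS; unfold Icl; lra. }
apply Rminus_diag_uniq.
apply (zero_of_small _ (2 + L * ME + 2 * T + T * L * MS / 2 + T * L * MS)).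
{ assert (0 <= L * ME) by (apply Rmult_le_pos; lra).
  assert (0 <= T * L * MS) by (repeat apply Rmult_le_pos; lra). lra. }
intros eps Heps.
destruct (UG eps Heps) as [dg [Hdg Hg]].
destruct (UF eps Heps) as [dF [HdF' HFu]].
set (lam := Rmin (Rmin (1/2) eps) (Rmin (dg / T) (dF / L))).
assert (Hlam : 0 < lam).
{ unfold lam; repeat apply Rmin_pos; try lra; apply Rdiv_lt_0_compat; lra. }
assert (Hl1 : lam <= 1/2) by (unfold lam; eapply Rle_trans; [apply Rmin_l| apply Rmin_l]).
assert (Hl2 : lam <= eps) by (unfold lam; eapply Rle_trans; [apply Rmin_l| apply Rmin_r]).
assert (Hl3 : lam * T <= dg).
{ assert (lam <= dg / T) by (unfold lam; eapply Rle_trans; [apply Rmin_r| apply Rmin_l]).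
  apply (Rmult_le_compat_r T) in H0; [|lra]. unfold Rdiv in H0. rewrite Rmult_assoc, Rinv_l in H0 by lra. lra. }
assert (Hl4 : lam * L <= dF).
{ assert (lam <= dF / L) by (unfold lam; eapply Rle_trans; [apply Rmin_r| apply Rmin_r]).
  apply (Rmult_le_compat_r L) in H0; [|lra]. unfold Rdiv in H0. rewrite Rmult_assoc, Rinv_l in H0 by lra. lra. }
set (a := lam * L / 4). set (b := L - lam * L / 4).
set (s1 := (1 - lam) * t1 + lam * T / 2). set (s2 := (1 - lam) * t2 + lam * T / 2).
assert (Ha : 0 < a) by (unfold a; apply Rdiv_lt_0_compat; [apply Rmult_lt_0_compat|]; lra).
assert (HlL : 0 < lam * L) by (apply Rmult_lt_0_compat; lra).
assert (HlT : 0 < lam * T) by (apply Rmult_lt_0_compat; lra).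
assert (Hab : a <= b) by (unfold a, b; nra).
assert (Hb : b < L) by (unfold b; lra).
assert (Hs1 : 0 < s1) by (unfold s1; nra).
assert (Hs12 : s1 <= s2) by (unfold s1, s2; nra).
assert (Hs2 : s2 < T) by (unfold s2; nra).
assert (Hd1 : Rabs (s1 - t1) <= lam * T / 2).
{ unfold s1. replace ((1 - lam) * t1 + lam * T / 2 - t1) with (lam * (T / 2 - t1)).
 2: field.
  rewrite Rabs_mult, (Rabs_pos_eq lam) by lra. replace (lam * T / 2) with (lam * (T / 2)) by field. apply Rmult_le_compat_l; [lra|].
  apply Rabs_le; lra. }
assert (Hd2 : Rabs (s2 - t2) <= lam * T / 2).
{ unfold s2. replace ((1 - lam) * t2 + lam * T / 2 - t2) with (lam * (T / 2 - t2)) by field.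
  rewrite Rabs_mult, (Rabs_pos_eq lam) by lra. replace (lam * T / 2) with (lam * (T / 2)) by field. apply Rmult_le_compat_l; [lra|].
  apply Rabs_le; lra. }
pose proof (bal_1 a b s1 s2 Ha Hab Hb Hs1 Hs12 Hs2) as Id.
set (h := fun t => F t b - F t a + RInt (Sg t) a b) in Id.
assert (E1 : Rabs (RInt (E s2) 0 L - RInt (E s2) a b) <= (a + (L - b)) * ME)
  by (apply (L_tail T); auto; unfold Icl; lra).
assert (E2 : Rabs (RInt (E s1) 0 L - RInt (E s1) a b) <= (a + (L - b)) * ME)
  by (apply (L_tail T); auto; unfold Icl; lra).
assert (E3 : Rabs (RInt (E t2) 0 L - RInt (E s2) 0 L) < eps).
{ apply Hg; try lra. rewrite Rabs_minus_sym. lra. }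
assert (E4 : Rabs (RInt (E t1) 0 L - RInt (E s1) 0 L) < eps).
{ apply Hg; try lra. rewrite Rabs_minus_sym. lra. }
assert (IH : forall c d, 0 <= c <= T -> 0 <= d <= T -> ex_RInt H c d)
  by (intros; apply (UC1_exRInt 0 T); auto; lra).
assert (Ih : ex_RInt h s1 s2).
{ apply (ex_RInt_continuous (V := R_CompleteNormedModule)). intros z Hz.
  unfold Rmin, Rmax in Hz; destruct Rle_dec in Hz; try lra.
  apply bal_1c; auto; unfold Iop; lra. }
assert (E5 : Rabs (RInt h s1 s2 - RInt H s1 s2) <= T * (2 * eps + (a + (L - b)) * MS)).
{ rewrite <- (RInt_minus (V := R_CompleteNormedModule)); auto; try (apply IH; lra).
  eapply Rle_trans. apply abs_RInt_le_const with (M := 2 * eps + (a + (L - b)) * MS); auto.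
  { apply (ex_RInt_minus (V := R_NormedModule)); auto; apply IH; lra. }
  { intros t Ht. unfold h, H, minus, plus, opp; simpl.
    assert (F1 : Rabs (F t b) < eps).
    { replace (F t b) with (F t b - F t L) by (rewrite (proj2 (HF0 t ltac:(unfold Icl; lra))); ring).
      apply HFu; unfold Icl; try lra. rewrite Rminus_diag, Rabs_R0; lra.
      unfold b. rewrite Rabs_left1 by nra. nra. }
    assert (F2 : Rabs (F t a) < eps).
    { replace (F t a) with (F t a - F t 0) by (rewrite (proj1 (HF0 t ltac:(unfold Icl; lra))); ring).
      apply HFu; unfold Icl; try lra. rewrite Rminus_diag, Rabs_R0; lra.
      unfold a. rewrite Rabs_pos_eq by nra. nra. }
    assert (F3 : Rabs (RInt (Sg t) 0 L - RInt (Sg t) a b) <= (a + (L - b)) * MS)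
      by (apply (L_tail T); auto; unfold Icl; lra).
    replace (F t b - F t a + RInt (Sg t) a b + - RInt (Sg t) 0 L)
      with (F t b - F t a - (RInt (Sg t) 0 L - RInt (Sg t) a b)) by ring.
    unfold Rminus at 1. eapply Rle_trans. apply Rabs_triang.
    rewrite Rabs_Ropp. eapply Rle_trans. apply Rplus_le_compat_r. apply Rabs_triang.
    rewrite Rabs_Ropp. lra. }
  apply Rmult_le_compat_r.
  { assert (0 <= (a + (L - b)) * MS) by (apply Rmult_le_pos; lra). lra. }
  lra. }
assert (E6 : Rabs (RInt H s1 s2 - RInt H t1 t2) <= lam * T * (L * MS)).
{ pose proof (RInt_Chasles (V := R_CompleteNormedModule) H t1 s1 s2
     ltac:(apply IH; lra) ltac:(apply IH; lra)) as C1.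
  pose proof (RInt_Chasles (V := R_CompleteNormedModule) H t1 s2 t2
     ltac:(apply IH; lra) ltac:(apply IH; lra)) as C2.
  unfold plus in C1, C2; simpl in C1, C2.
  rewrite <- C2, <- C1.
  replace (RInt H s1 s2 - (RInt H t1 s1 + RInt H s1 s2 + RInt H s2 t2))
    with (- (RInt H t1 s1 + RInt H s2 t2)) by ring.
  rewrite Rabs_Ropp. eapply Rle_trans. apply Rabs_triang.
  assert (B1 : Rabs (RInt H t1 s1) <= Rabs (s1 - t1) * (L * MS)).
  { apply RInt_abs_bound. apply IH; lra. intros s Hs. apply HHb.
    unfold Rmin, Rmax in Hs; destruct Rle_dec in Hs; lra. }
  assert (B2 : Rabs (RInt H s2 t2) <= Rabs (t2 - s2) * (L * MS)).
  { apply RInt_abs_bound. apply IH; lra. intros s Hs. apply HHb.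
    unfold Rmin, Rmax in Hs; destruct Rle_dec in Hs; lra. }
  rewrite Rabs_minus_sym in B2.
  assert (0 <= L * MS) by (apply Rmult_le_pos; lra).
  assert (Rabs (s1 - t1) * (L * MS) <= lam * T / 2 * (L * MS)) by (apply Rmult_le_compat_r; lra).
  assert (Rabs (s2 - t2) * (L * MS) <= lam * T / 2 * (L * MS)) by (apply Rmult_le_compat_r; lra).
  lra. }
assert (Hsum : RInt (E t2) 0 L - RInt (E t1) 0 L - RInt H t1 t2 =
   (RInt (E t2) 0 L - RInt (E s2) 0 L) + (RInt (E s2) 0 L - RInt (E s2) a b)
   - (RInt (E t1) 0 L - RInt (E s1) 0 L) - (RInt (E s1) 0 L - RInt (E s1) a b)
   + (RInt h s1 s2 - RInt H s1 s2) + (RInt H s1 s2 - RInt H t1 t2)) by (rewrite <- Id; ring).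
fold H. rewrite Hsum.
assert (Hal : a + (L - b) = lam * L / 2) by (unfold a, b; field).
rewrite Hal in E1, E2, E5.
assert (K1 : lam * L / 2 * ME <= eps * (L * ME) / 2).
{ assert (0 <= L * ME) by (apply Rmult_le_pos; lra). nra. }
assert (K2 : lam * L / 2 * MS <= eps * (L * MS) / 2).
{ assert (0 <= L * MS) by (apply Rmult_le_pos; lra). nra. }
assert (K3 : lam * T * (L * MS) <= eps * (T * L * MS)).
{ assert (0 <= T * L * MS) by (repeat apply Rmult_le_pos; lra). nra. }
assert (K4 : T * (2 * eps + lam * L / 2 * MS) <= eps * (2 * T + T * L * MS / 2)) by nra.
apply Rabs_le.
match goal with |- _ <= ?x1 + ?x2 - ?x3 - ?x4 + ?x5 + ?x6 <= _ =>
  pose proof (Rle_abs x1); pose proof (Rle_abs (- x1)); rewrite Rabs_Ropp in *;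
  pose proof (Rle_abs x2); pose proof (Rle_abs (- x2)); rewrite Rabs_Ropp in *;
  pose proof (Rle_abs x3); pose proof (Rle_abs (- x3)); rewrite Rabs_Ropp in *;
  pose proof (Rle_abs x4); pose proof (Rle_abs (- x4)); rewrite Rabs_Ropp in *;
  pose proof (Rle_abs x5); pose proof (Rle_abs (- x5)); rewrite Rabs_Ropp in *;
  pose proof (Rle_abs x6); pose proof (Rle_abs (- x6)); rewrite Rabs_Ropp in *
end.
split; lra.
Qed.

End Balance.


Lemma dplus f g x a b : is_derive f x a -> is_derive g x b ->
  is_derive (fun y => f y + g y) x (a + b).
Proof. intros; apply (is_derive_plus f g); auto. Qed.
Lemma dminus f g x a b : is_derive f x a -> is_derive g x b ->
  is_derive (fun y => f y - g y) x (a - b).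
Proof. intros; apply (is_derive_minus f g); auto. Qed.
Lemma dmult f g x a b : is_derive f x a -> is_derive g x b ->
  is_derive (fun y => f y * g y) x (a * g x + f x * b).
Proof. intros; apply (is_derive_mult f g); auto. intros; apply Rmult_comm. Qed.
Lemma dscal k f x a : is_derive f x a -> is_derive (fun y => k * f y) x (k * a).
Proof. intros; apply is_derive_scal; auto. Qed.
Lemma dcomp (phi : R -> R) f x p a : is_derive phi (f x) p -> is_derive f x a ->
  is_derive (fun y => phi (f y)) x (p * a).
Proof. intros H1 H2. rewrite Rmult_comm. apply (is_derive_comp phi f x p a H1 H2). Qed.
Lemma dconst (k x : R) : is_derive (fun _ : R => k) x 0.
Proof. apply (is_derive_const (K := R_AbsRing) (V := R_NormedModule) k x). Qed.
Lemma dvalue (f : R -> R) (x a b : R) : is_derive f x a -> a = b -> is_derive f x b.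
Proof. intros; subst; auto. Qed.

Lemma deriv_cont f x l : is_derive f x l -> continuity_pt f x.
Proof.
intros H. apply is_derive_Reals in H. apply derivable_continuous_pt. exists l. exact H.
Qed.

Definition neg (s : R) := Rmin s 0.

Lemma neg_abs s : Rabs (neg s) <= Rabs s.
Proof. unfold neg, Rmin; destruct Rle_dec; unfold Rabs; repeat destruct Rcase_abs; lra. Qed.

Lemma neg_pow_derive (k : nat) s : (2 <= k)%nat ->
  is_derive (fun y => neg y ^ k) s (INR k * neg s ^ (k - 1)).
Proof.
intros Hk. destruct (Rlt_le_dec s 0) as [Hs|Hs].
- apply is_derive_ext_loc with (fun y => y ^ k).
  + assert (Hp : 0 < - s) by lra. exists (mkposreal _ Hp). intros y Hy.
    apply ballR in Hy. change (Rabs (y - s) < - s) in Hy. apply Rabs_def2 in Hy.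
    unfold neg, Rmin. destruct Rle_dec; [reflexivity| lra].
  + apply dvalue with (INR k * 1 * s ^ Init.Nat.pred k).
    apply is_derive_pow. apply (is_derive_id s).
    unfold neg, Rmin. destruct Rle_dec; [|lra]. replace (k - 1)%nat with (Init.Nat.pred k) by lia. ring.
- destruct (Rle_lt_or_eq_dec 0 s Hs) as [Hs'|Hs'].
  + apply is_derive_ext_loc with (fun _ => 0).
    * exists (mkposreal _ Hs'). intros y Hy.
      apply ballR in Hy. change (Rabs (y - s) < s) in Hy. apply Rabs_def2 in Hy.
      unfold neg, Rmin. destruct Rle_dec; [lra|]. rewrite pow_i by lia. reflexivity.
    * apply dvalue with 0. apply dconst. unfold neg, Rmin. destruct Rle_dec; [lra|].
      rewrite pow_i by lia. ring.
  + subst s. apply is_derive_Reals. intros e He.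
    assert (Hd : 0 < Rmin 1 e) by (apply Rmin_pos; lra).
    exists (mkposreal _ Hd). intros h Hh0 Hh. simpl in Hh.
    pose proof (Rmin_l 1 e). pose proof (Rmin_r 1 e).
    rewrite Rplus_0_l.
    replace (neg 0) with 0 by (unfold neg; rewrite Rmin_left; lra).
    rewrite pow_i by lia. rewrite pow_i by lia.
    replace ((neg h ^ k - 0) / h - INR k * 0) with (neg h ^ k / h) by (field; auto).
    assert (Ha : 0 < Rabs h) by (apply Rabs_pos_lt; auto).
    unfold Rdiv. rewrite Rabs_mult, Rabs_inv, <- RPow_abs.
    assert (Hn : Rabs (neg h) ^ k <= Rabs h ^ k).
    { apply pow_incr. split. apply Rabs_pos. apply neg_abs. }
    assert (Hp : Rabs h ^ (k - 2) <= 1).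
    { rewrite <- (pow1 (k - 2)). apply pow_incr. split. apply Rabs_pos. lra. }
    assert (Hq : 0 <= Rabs h ^ (k - 2)) by (apply pow_le; apply Rabs_pos).
    assert (Hk2 : Rabs h ^ k = Rabs h * Rabs h * Rabs h ^ (k - 2)).
    { replace k with (2 + (k - 2))%nat at 1 by lia. rewrite pow_add. simpl. ring. }
    apply Rle_lt_trans with (Rabs h ^ k * / Rabs h).
    { apply Rmult_le_compat_r; [left; apply Rinv_0_lt_compat; auto| auto]. }
    rewrite Hk2. replace (Rabs h * Rabs h * Rabs h ^ (k - 2) * / Rabs h) with (Rabs h * Rabs h ^ (k - 2)) by (field; lra).
    nra.
Qed.

Definition phi (s : R) := neg s ^ 4.
Definition phi1 (s : R) := 4 * neg s ^ 3.
Definition phi2 (s : R) := 12 * neg s ^ 2.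

Lemma dphi s : is_derive phi s (phi1 s).
Proof.
apply dvalue with (INR 4 * neg s ^ (4 - 1)). apply neg_pow_derive; lia.
unfold phi1. simpl. ring.
Qed.
Lemma dphi1 s : is_derive phi1 s (phi2 s).
Proof.
apply dvalue with (4 * (INR 3 * neg s ^ (3 - 1))). apply dscal. apply neg_pow_derive; lia.
unfold phi2. simpl. ring.
Qed.
Lemma cphi s : continuity_pt phi s.
Proof. apply (deriv_cont _ _ _ (dphi s)). Qed.
Lemma cphi1 s : continuity_pt phi1 s.
Proof. apply (deriv_cont _ _ _ (dphi1 s)). Qed.
Lemma cphi2 s : continuity_pt phi2 s.
Proof.
apply (deriv_cont _ s (12 * (INR 2 * neg s ^ (2 - 1)))). apply dscal. apply neg_pow_derive; lia.
Qed.

Lemma phi_facts s : 0 <= phi s /\ 0 <= phi2 s /\ phi1 s <= 0 /\ 0 <= phi1 s * s /\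
  phi2 s * s ^ 2 = 12 * phi s /\ (phi s = 0 -> 0 <= s) /\ (0 <= s -> phi s = 0).
Proof.
unfold phi, phi1, phi2, neg, Rmin. destruct Rle_dec as [H|H]; simpl.
- assert (H2 : 0 <= s * s) by nra.
  assert (H4 : 0 <= s * s * (s * s)) by nra.
  repeat split; try nra.
  intros H0. destruct (Req_dec s 0); [lra|].
  assert (0 < s * s) by (apply Rsqr_pos_lt; auto). nra.
  intros; replace s with 0 by lra; ring.
- repeat split; intros; try lra; try ring.
Qed.

Definition Psi (s : R) := (s + 1) * ln (s + 1) - s.
Definition Psi1 (s : R) := ln (s + 1).
Definition Psi2 (s : R) := / (s + 1).

Lemma dlin s : is_derive (fun y => y + 1) s 1.
Proof. apply dvalue with (1 + 0). apply dplus. apply (is_derive_id (K := R_AbsRing)). apply dconst. ring. Qed.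

Lemma dPsi1 s : -1 < s -> is_derive Psi1 s (Psi2 s).
Proof.
intros Hs. unfold Psi1, Psi2. apply dvalue with (/ (s + 1) * 1).
apply (dcomp ln (fun y => y + 1)). apply is_derive_ln; lra. apply dlin. ring.
Qed.

Lemma dPsi s : -1 < s -> is_derive Psi s (Psi1 s).
Proof.
intros Hs. unfold Psi. apply dvalue with ((1 * ln (s + 1) + (s + 1) * Psi2 s) - 1).
apply (dminus (fun y => (y + 1) * ln (y + 1)) (fun y => y)). apply (dmult (fun y => y + 1) (fun y => ln (y + 1))). apply dlin. apply dPsi1; auto. apply (is_derive_id (K := R_AbsRing)).
unfold Psi1, Psi2. field. lra.
Qed.

Lemma cPsi s : -1 < s -> continuity_pt Psi s.
Proof. intros; apply (deriv_cont _ _ _ (dPsi s H)). Qed.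
Lemma cPsi1 s : -1 < s -> continuity_pt Psi1 s.
Proof. intros; apply (deriv_cont _ _ _ (dPsi1 s H)). Qed.
Lemma cPsi2 s : -1 < s -> continuity_pt Psi2 s.
Proof.
intros Hs. unfold Psi2. apply (deriv_cont _ s (- 1 / (s + 1) ^ 2)).
apply (is_derive_inv (fun y => y + 1) s 1). apply dlin. lra.
Qed.

Lemma ln_ge y : 0 < y -> 1 - / y <= ln y.
Proof.
intros Hy. pose proof (exp_ineq1_le (- ln y)).
rewrite exp_Ropp, exp_ln in H by auto. lra.
Qed.

Lemma Psi_nonneg s : 0 <= s -> 0 <= Psi s.
Proof.
intros Hs. unfold Psi. pose proof (ln_ge (s + 1) ltac:(lra)).
apply Rmult_le_compat_l with (r := s + 1) in H; [|lra].
replace ((s + 1) * (1 - / (s + 1))) with s in H by (field; lra). lra.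
Qed.


Lemma RInt_cst (c p q : R) : RInt (fun _ => c) p q = (q - p) * c.
Proof. rewrite RInt_const. reflexivity. Qed.

Lemma int_zero_pos L g : 0 < L -> UC1 0 L g -> (forall x, 0 <= x <= L -> 0 <= g x) ->
  RInt g 0 L <= 0 -> forall x, 0 <= x <= L -> g x = 0.
Proof.
intros HL Hu Hp Hi x0 Hx0.
destruct (Rle_lt_or_eq_dec 0 (g x0) (Hp x0 Hx0)) as [Hg|Hg]; [|auto].
exfalso.
destruct (Hu (g x0 / 2) ltac:(lra)) as [d [Hd Hdd]].
set (p := Rmax 0 (x0 - d / 2)). set (q := Rmin L (x0 + d / 2)).
assert (Hp0 : 0 <= p) by apply Rmax_l.
assert (HqL : q <= L) by apply Rmin_l.
assert (Hpq : p < q).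
{ unfold p, q, Rmax, Rmin. repeat destruct Rle_dec; lra. }
assert (Hpx : x0 - d / 2 <= p) by apply Rmax_r.
assert (Hqx : q <= x0 + d / 2) by apply Rmin_r.
assert (Hin : forall y, p <= y <= q -> g x0 / 2 < g y).
{ intros y Hy. assert (Rabs (y - x0) < d) by (apply Rabs_def1; lra).
  specialize (Hdd y x0 ltac:(lra) Hx0 H). apply Rabs_def2 in Hdd. lra. }
assert (I1 := UC1_exRInt 0 L g 0 p ltac:(lra) Hu ltac:(lra) ltac:(lra)).
assert (I2 := UC1_exRInt 0 L g p q ltac:(lra) Hu ltac:(lra) ltac:(lra)).
assert (I3 := UC1_exRInt 0 L g q L ltac:(lra) Hu ltac:(lra) ltac:(lra)).
assert (I4 := UC1_exRInt 0 L g p L ltac:(lra) Hu ltac:(lra) ltac:(lra)).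
pose proof (RInt_Chasles (V := R_CompleteNormedModule) g 0 p L I1 I4) as C1.
pose proof (RInt_Chasles (V := R_CompleteNormedModule) g p q L I2 I3) as C2.
unfold plus in C1, C2; simpl in C1, C2.
assert (B1 : 0 <= RInt g 0 p) by (apply RInt_ge_0; auto; intros; apply Hp; lra).
assert (B3 : 0 <= RInt g q L) by (apply RInt_ge_0; auto; intros; apply Hp; lra).
assert (B2 : RInt (fun _ => g x0 / 2) p q <= RInt g p q).
{ apply RInt_le; auto; [lra| |]. apply ex_RInt_const. intros y Hy; left; apply Hin; lra. }
rewrite RInt_cst in B2.
assert (0 < (q - p) * (g x0 / 2)) by (apply Rmult_lt_0_compat; lra).
lra.
Qed.

Lemma cont1_UC1 L f : 0 < L -> continuous_on (Icl L) f -> UC1 0 L f.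
Proof.
intros HL Hc.
assert (H2 : continuous_on (Rcl 1 L) (uncurry2 (fun _ x => f x))).
{ intros [t x] [Ht Hx]. simpl in Ht, Hx. specialize (Hc x Hx).
  apply filterlim_locally. intros e. apply filterlim_locally with (eps := e) in Hc.
  destruct Hc as [d Hd]. exists d. intros [t' x'] Hb Hr. destruct Hr as [_ Hx']. simpl in Hx'.
  apply ballR2 in Hb. destruct Hb as [_ Hb]. unfold uncurry2; simpl. apply Hd; auto. }
pose proof (cont_UC 1 L _ ltac:(lra) HL H2) as U.
intros e He. destruct (U e He) as [d [Hd Hdd]]. exists d. split; auto.
intros s s' Hs Hs' Hss. apply (Hdd 0 s 0 s'); unfold Icl; try lra.
rewrite Rminus_diag, Rabs_R0; lra.
Qed.

Lemma UC1_bound L f : 0 < L -> UC1 0 L f -> exists M, forall x, 0 <= x <= L -> Rabs (f x) <= M.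
Proof.
intros HL U.
assert (U2 : UC 1 L (fun _ x => f x)).
{ intros e He. destruct (U e He) as [d [Hd Hdd]]. exists d; split; auto.
  }
destruct (UC_bound 1 L _ ltac:(lra) HL U2) as [M HM].
exists M. intros x Hx. apply (HM 0 x); unfold Icl; lra.
Qed.

Lemma inner_ex T L f t : 0 < T -> 0 < L -> CC T L f -> Icl T t -> ex_RInt (f t) 0 L.
Proof. intros; apply (UC_exRInt T L); auto; try lra. apply CC_UC; auto. Qed.

Lemma iter_ex T L f t1 t2 : 0 < T -> 0 < L -> CC T L f -> 0 <= t1 <= T -> 0 <= t2 <= T ->
  ex_RInt (fun t => RInt (f t) 0 L) t1 t2.
Proof.
intros. apply (UC1_exRInt 0 T); auto; try lra.
apply (UC_RInt_UC1 T L f 0 L); auto; try lra. apply CC_UC; auto.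
Qed.

Lemma inner_le T L f g t : 0 < T -> 0 < L -> CC T L f -> CC T L g -> Icl T t ->
  (forall x, Icl L x -> f t x <= g t x) -> RInt (f t) 0 L <= RInt (g t) 0 L.
Proof.
intros. apply RInt_le; try lra; try (apply (inner_ex T); auto).
intros; apply H4; unfold Icl; lra.
Qed.

Lemma iter_le T L f g t1 t2 : 0 < T -> 0 < L -> CC T L f -> CC T L g ->
  (forall t x, Icl T t -> Icl L x -> f t x <= g t x) -> 0 <= t1 -> t1 <= t2 -> t2 <= T ->
  RInt (fun t => RInt (f t) 0 L) t1 t2 <= RInt (fun t => RInt (g t) 0 L) t1 t2.
Proof.
intros. apply RInt_le; auto; try (apply (iter_ex T); auto; lra).
intros t Ht. apply (inner_le T); auto. unfold Icl; lra. intros; apply H3; auto; unfold Icl; lra.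
Qed.

Lemma CC_time T L : CC T L (fun t _ => t).
Proof.
intros t x e. exists e. intros u v Hu Hv. unfold ext.
assert (0 <= T \/ T < 0) by lra.
unfold clip, Rmax, Rmin. repeat destruct Rle_dec; unfold Rabs in *; repeat destruct Rcase_abs; try lra.
Qed.

Lemma inner_lin T L f g a t : 0 < T -> 0 < L -> CC T L f -> CC T L g -> Icl T t ->
  RInt (fun x => a * f t x + g t x) 0 L = a * RInt (f t) 0 L + RInt (g t) 0 L.
Proof.
intros. rewrite (RInt_plus (V := R_CompleteNormedModule) (fun x => a * f t x) (g t)).
- assert (Hi : ex_RInt (f t) 0 L) by (apply (inner_ex T); auto).
  pose proof (RInt_scal (V := R_CompleteNormedModule) (f t) 0 L a Hi) as Hs.
  change (RInt (fun x => a * f t x) 0 L = a * RInt (f t) 0 L) in Hs.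
  change (RInt (fun x => a * f t x) 0 L + RInt (g t) 0 L = a * RInt (f t) 0 L + RInt (g t) 0 L).
  rewrite Hs. reflexivity.
- apply (ex_RInt_scal (V := R_NormedModule) (f t) 0 L a). apply (inner_ex T); auto.
- apply (inner_ex T); auto.
Qed.

Lemma iter_lin T L f g a t1 t2 : 0 < T -> 0 < L -> CC T L f -> CC T L g ->
  0 <= t1 <= T -> 0 <= t2 <= T ->
  RInt (fun t => RInt (fun x => a * f t x + g t x) 0 L) t1 t2 =
  a * RInt (fun t => RInt (f t) 0 L) t1 t2 + RInt (fun t => RInt (g t) 0 L) t1 t2.
Proof.
intros. rewrite (RInt_ext (fun t => RInt (fun x => a * f t x + g t x) 0 L)
   (fun t => a * RInt (f t) 0 L + RInt (g t) 0 L)).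
2:{ intros x Hx. apply (inner_lin T); auto. unfold Icl.
    unfold Rmin, Rmax in Hx; destruct Rle_dec in Hx; lra. }
rewrite (RInt_plus (V := R_CompleteNormedModule) (fun t => a * RInt (f t) 0 L) (fun t => RInt (g t) 0 L)).
- assert (Hi : ex_RInt (fun t => RInt (f t) 0 L) t1 t2) by (apply (iter_ex T); auto).
  pose proof (RInt_scal (V := R_CompleteNormedModule) (fun t => RInt (f t) 0 L) t1 t2 a Hi) as Hs.
  change (RInt (fun t => a * RInt (f t) 0 L) t1 t2 = a * RInt (fun t => RInt (f t) 0 L) t1 t2) in Hs.
  change (RInt (fun t => a * RInt (f t) 0 L) t1 t2 + RInt (fun t => RInt (g t) 0 L) t1 t2 =
     a * RInt (fun t => RInt (f t) 0 L) t1 t2 + RInt (fun t => RInt (g t) 0 L) t1 t2).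
  rewrite Hs. reflexivity.
- apply (ex_RInt_scal (V := R_NormedModule) (fun t => RInt (f t) 0 L) t1 t2 a). apply (iter_ex T); auto.
- apply (iter_ex T); auto.
Qed.


Section Sol.
Variables (L T r sigma b c : R) (uT m0 : R -> R) (u ut ux uxx m mt mx mxx : R -> R -> R).
Hypothesis HL : 0 < L.
Hypothesis Hsig : 0 < sigma.
Hypothesis Hm0 : forall x, Icl L x -> 0 <= m0 x.
Hypothesis HuT : forall x, Icl L x -> 0 <= uT x.
Hypothesis Hrpos : 0 < r.
Hypothesis Hbc : b + c = 1.
Hypothesis Hc : 0 < c.
Hypothesis Hb : 0 < b.
Hypothesis Hm0int : RInt m0 0 L = 1.
Hypothesis HT : 0 < T.
Hypothesis Cu : continuous_on (Rcl T L) (uncurry2 u).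
Hypothesis Cm : continuous_on (Rcl T L) (uncurry2 m).
Hypothesis Cux : continuous_on (Rcl T L) (uncurry2 ux).
Hypothesis Cmx : continuous_on (Rcl T L) (uncurry2 mx).
Hypothesis Cut : continuous_on (Rop T L) (uncurry2 ut).
Hypothesis Cmt : continuous_on (Rop T L) (uncurry2 mt).
Hypothesis Dx : forall t x, Icl T t -> Iop L x ->
     is_derive (fun y => u t y) x (ux t x) /\ is_derive (fun y => m t y) x (mx t x).
Hypothesis Dt : forall t x, Iop T t -> Iop L x ->
     is_derive (fun s => u s x) t (ut t x) /\ is_derive (fun s => m s x) t (mt t x) /\
     is_derive (fun y => ux t y) x (uxx t x) /\ is_derive (fun y => mx t y) x (mxx t x).
Hypothesis EqU : forall t x, Iop T t -> Iop L x ->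
     ut t x + sigma ^ 2 / 2 * uxx t x - r * u t x + (Gfun b c L ux m t x) ^ 2 = 0.
Hypothesis EqM : forall t x, Iop T t -> Iop L x ->
     is_derive (fun y => Gfun b c L ux m t y * m t y) x (mt t x - sigma ^ 2 / 2 * mxx t x).
Hypothesis Init : forall x, Icl L x -> m 0 x = m0 x /\ u T x = uT x.
Hypothesis Neu : forall t, Icl T t -> ux t 0 = 0 /\ ux t L = 0.
Hypothesis NoF : forall t x, Icl T t -> (x = 0 \/ x = L) ->
     sigma ^ 2 / 2 * mx t x + Gfun b c L ux m t x * m t x = 0.

Local Notation G := (Gfun b c L ux m).
Definition Flux t x := sigma ^ 2 / 2 * mx t x + G t x * m t x.

Lemma CCu : CC T L u. Proof. apply cont_CC; auto. Qed.
Lemma CCm : CC T L m. Proof. apply cont_CC; auto. Qed.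
Lemma CCux : CC T L ux. Proof. apply cont_CC; auto. Qed.
Lemma CCmx : CC T L mx. Proof. apply cont_CC; auto. Qed.

Lemma UA : UC1 0 T (fun t => RInt (fun y => ux t y * m t y) 0 L).
Proof.
apply (UC_RInt_UC1 T L (fun t y => ux t y * m t y) 0 L); auto; try lra.
apply CC_UC; auto. apply CC_mult. apply CCux. apply CCm.
Qed.

Lemma CCG : CC T L G.
Proof.
unfold Gfun.
apply (CC_mult T L (fun _ _ => / 2) (fun t x => b + c * RInt (fun y => ux t y * m t y) 0 L - ux t x)).
apply CC_const.
apply (CC_minus T L (fun t x => b + c * RInt (fun y => ux t y * m t y) 0 L) ux); [|apply CCux].
apply (CC_plus T L (fun _ _ => b) (fun t x => c * RInt (fun y => ux t y * m t y) 0 L)). apply CC_const.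
apply (CC_mult T L (fun _ _ => c) (fun t x => RInt (fun y => ux t y * m t y) 0 L)). apply CC_const.
apply (CC_t T L (fun t => RInt (fun y => ux t y * m t y) 0 L)); auto. apply UA.
Qed.

Lemma CCFlux : CC T L Flux.
Proof.
unfold Flux.
apply (CC_plus T L (fun t x => sigma ^ 2 / 2 * mx t x) (fun t x => G t x * m t x)).
apply (CC_mult T L (fun _ _ => sigma ^ 2 / 2) mx). apply CC_const. apply CCmx.
apply (CC_mult T L G m). apply CCG. apply CCm.
Qed.

Lemma dFlux t x : Iop T t -> Iop L x -> is_derive (fun y => Flux t y) x (mt t x).
Proof.
intros Ht Hx. unfold Flux.
apply dvalue with (sigma ^ 2 / 2 * mxx t x + (mt t x - sigma ^ 2 / 2 * mxx t x)); [|ring].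
apply (dplus (fun y => sigma ^ 2 / 2 * mx t y) (fun y => G t y * m t y)).
apply dscal. apply (Dt t x Ht Hx).
apply EqM; auto.
Qed.

Lemma Flux0 t : Icl T t -> Flux t 0 = 0 /\ Flux t L = 0.
Proof. intros Ht. unfold Flux. split; apply NoF; auto. Qed.

Lemma ptop t x : Rop T L (t, x) -> Iop T t /\ Iop L x.
Proof. intros [H1 H2]; split; auto. Qed.

Lemma mass t : Icl T t -> RInt (m t) 0 L = RInt m0 0 L.
Proof.
intros Ht.
assert (HdF : forall t x, Iop T t -> Iop L x -> is_derive (fun y => Flux t y) x (mt t x - (fun _ _ => 0) t x)).
{ intros; apply dvalue with (mt t0 x). apply dFlux; auto. ring. }
pose proof (balance T L m mt Flux (fun _ _ => 0) HT HL CCm CCFlux (CC_const T L 0)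
  (fun t x H => contop_pt T L mt t x Cmt H)
  (fun t x H1 H2 => proj1 (proj2 (Dt t x H1 H2)))
  HdF
  Flux0 0 t ltac:(unfold Icl in Ht; lra) ltac:(unfold Icl in Ht; lra) ltac:(unfold Icl in Ht; lra)) as B.
rewrite (RInt_ext (fun t0 => RInt (fun _ => 0) 0 L) (fun _ => 0)) in B.
2:{ intros; rewrite RInt_cst; apply Rmult_0_r. }
rewrite RInt_cst, Rmult_0_r in B.
rewrite (RInt_ext (m 0) m0) in B.
2:{ intros x Hx. apply Init. unfold Icl. unfold Rmin, Rmax in Hx; destruct Rle_dec in Hx; lra. }
lra.
Qed.


Lemma cexp s : continuity_pt exp s.
Proof. apply (deriv_cont _ _ _ (is_derive_exp s)). Qed.

Lemma CCexp K : CC T L (fun t _ => exp (- K * t)).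
Proof.
apply (CC_comp T L exp (fun t _ => - K * t)); try lra. intros; apply cexp.
apply (CC_mult T L (fun _ _ => - K) (fun t _ => t)). apply CC_const. apply CC_time.
Qed.

Lemma dexpK K t : is_derive (fun s => exp (- K * s)) t (exp (- K * t) * (- K)).
Proof.
apply dvalue with (exp (- K * t) * (- K * 1)); [|ring].
apply (dcomp exp (fun s => - K * s)). apply is_derive_exp. apply dscal. apply (is_derive_id (K := R_AbsRing)).
Qed.

Lemma CCcomp (p : R -> R) f : (forall s, continuity_pt p s) -> CC T L f -> CC T L (fun t x => p (f t x)).
Proof. intros; apply CC_comp; auto; lra. Qed.

Lemma mpos : forall t x, Icl T t -> Icl L x -> 0 <= m t x.
Proof.
destruct (UC_bound T L G HT HL (CC_UC T L G HT HL CCG)) as [MG HMG].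
set (K := 6 * MG ^ 2 / sigma ^ 2).
set (E := fun t x => exp (- K * t) * phi (m t x)).
set (Et := fun t x => (exp (- K * t) * (- K)) * phi (m t x) + exp (- K * t) * (phi1 (m t x) * mt t x)).
set (F := fun t x => exp (- K * t) * (phi1 (m t x) * Flux t x)).
set (Sg := fun t x => exp (- K * t) * (- K * phi (m t x) - phi2 (m t x) * mx t x * Flux t x)).
assert (CCE : CC T L E).
{ unfold E. apply (CC_mult T L (fun t _ => exp (- K * t)) (fun t x => phi (m t x))).
  apply CCexp. apply CCcomp. apply cphi. apply CCm. }
assert (CCF : CC T L F).
{ unfold F. apply (CC_mult T L (fun t _ => exp (- K * t)) (fun t x => phi1 (m t x) * Flux t x)).
  apply CCexp. apply (CC_mult T L (fun t x => phi1 (m t x)) Flux). apply CCcomp. apply cphi1. apply CCm.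
  apply CCFlux. }
assert (CCS : CC T L Sg).
{ unfold Sg. apply (CC_mult T L (fun t _ => exp (- K * t))
     (fun t x => - K * phi (m t x) - phi2 (m t x) * mx t x * Flux t x)).
  apply CCexp.
  apply (CC_minus T L (fun t x => - K * phi (m t x)) (fun t x => phi2 (m t x) * mx t x * Flux t x)).
  apply (CC_mult T L (fun _ _ => - K) (fun t x => phi (m t x))). apply CC_const. apply CCcomp. apply cphi. apply CCm.
  apply (CC_mult T L (fun t x => phi2 (m t x) * mx t x) Flux); [|apply CCFlux].
  apply (CC_mult T L (fun t x => phi2 (m t x)) mx); [|apply CCmx]. apply CCcomp. apply cphi2. apply CCm. }
assert (HEt : forall t x, Rop T L (t, x) -> continuity_2d_pt Et t x).
{ intros t x Hr. unfold Et.
  apply (continuity_2d_pt_plus (fun t x => exp (- K * t) * (- K) * phi (m t x))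
                               (fun t x => exp (- K * t) * (phi1 (m t x) * mt t x))).
  - apply (continuity_2d_pt_mult (fun t x => exp (- K * t) * (- K)) (fun t x => phi (m t x))).
    + apply (continuity_2d_pt_mult (fun t x => exp (- K * t)) (fun _ _ => - K)).
      apply (CC_pt T L (fun t _ => exp (- K * t))); auto. apply CCexp. apply continuity_2d_pt_const.
    + apply (CC_pt T L (fun t x => phi (m t x))); auto. apply CCcomp. apply cphi. apply CCm.
  - apply (continuity_2d_pt_mult (fun t x => exp (- K * t)) (fun t x => phi1 (m t x) * mt t x)).
    apply (CC_pt T L (fun t _ => exp (- K * t))); auto. apply CCexp.
    apply (continuity_2d_pt_mult (fun t x => phi1 (m t x)) mt).
    apply (CC_pt T L (fun t x => phi1 (m t x))); auto. apply CCcomp. apply cphi1. apply CCm.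
    apply (contop_pt T L); auto. }
assert (HdE : forall t x, Iop T t -> Iop L x -> is_derive (fun s => E s x) t (Et t x)).
{ intros t x Ht Hx. unfold E, Et.
  apply (dmult (fun s => exp (- K * s)) (fun s => phi (m s x))). apply dexpK.
  apply (dcomp phi (fun s => m s x)). apply dphi. apply (Dt t x Ht Hx). }
assert (HdF : forall t x, Iop T t -> Iop L x -> is_derive (fun y => F t y) x (Et t x - Sg t x)).
{ intros t x Ht Hx. unfold F, Et, Sg.
  apply dvalue with (exp (- K * t) * ((phi2 (m t x) * mx t x) * Flux t x + phi1 (m t x) * mt t x)).
  2:{ ring. }
  apply dscal. apply (dmult (fun y => phi1 (m t y)) (fun y => Flux t y)).
  apply (dcomp phi1 (fun y => m t y)). apply dphi1. apply (Dx t x); auto. unfold Icl, Iop in *; lra.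
  apply dFlux; auto. }
assert (HF0 : forall t, Icl T t -> F t 0 = 0 /\ F t L = 0).
{ intros t Ht. unfold F. destruct (Flux0 t Ht) as [H1 H2]. rewrite H1, H2. split; ring. }
assert (Sneg : forall t x, Icl T t -> Icl L x -> Sg t x <= 0).
{ intros t x Ht Hx. unfold Sg.
  assert (He : 0 < exp (- K * t)) by apply exp_pos.
  cut (- K * phi (m t x) - phi2 (m t x) * mx t x * Flux t x <= 0).
  { intros; nra. }
  destruct (phi_facts (m t x)) as [P0 [P2 [_ [_ [P3 _]]]]].
  set (p := phi (m t x)) in *. set (p2 := phi2 (m t x)) in *.
  set (g := G t x). set (mm := m t x) in *. set (w := mx t x).
  assert (Hg : g ^ 2 <= MG ^ 2).
  { specialize (HMG t x Ht Hx). fold g in HMG. 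
    apply pow_maj_Rabs. exact HMG. }
  unfold Flux. fold g mm w.
  assert (Hs2 : 0 < sigma ^ 2) by (apply pow_lt; lra).
  assert (h1 : - (g * mm) ^ 2 / (2 * sigma ^ 2) <= sigma ^ 2 / 2 * w ^ 2 + w * g * mm).
  { apply (Rmult_le_reg_r (2 * sigma ^ 2)); [lra|].
    replace (- (g * mm) ^ 2 / (2 * sigma ^ 2) * (2 * sigma ^ 2)) with (- (g * mm) ^ 2) by (field; lra).
    assert (0 <= (sigma ^ 2 * w + g * mm) ^ 2) by apply pow2_ge_0. nra. }
  assert (h2 : p2 * (- (g * mm) ^ 2 / (2 * sigma ^ 2)) = - 6 * g ^ 2 * p / sigma ^ 2).
  { replace (p2 * (- (g * mm) ^ 2 / (2 * sigma ^ 2))) with (- g ^ 2 * (p2 * mm ^ 2) / (2 * sigma ^ 2)) by (field; lra).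
    rewrite P3. field. lra. }
  assert (h3 : 6 * g ^ 2 * p / sigma ^ 2 <= K * p).
  { unfold K. unfold Rdiv. rewrite !Rmult_assoc. apply Rmult_le_compat_l; [lra|].
    rewrite (Rmult_comm p), <- !Rmult_assoc. apply Rmult_le_compat_r; auto.
    apply Rmult_le_compat_r; auto. left; apply Rinv_0_lt_compat; auto. }
  assert (h4 : p2 * (- (g * mm) ^ 2 / (2 * sigma ^ 2)) <= p2 * (sigma ^ 2 / 2 * w ^ 2 + w * g * mm))
    by (apply Rmult_le_compat_l; auto).
  replace (p2 * w * (sigma ^ 2 / 2 * w + g * mm)) with (p2 * (sigma ^ 2 / 2 * w ^ 2 + w * g * mm)) by ring.
  lra. }
intros t x Ht Hx.
pose proof (balance T L E Et F Sg HT HL CCE CCF CCS HEt HdE HdF HF0 0 t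
   ltac:(lra) ltac:(unfold Icl in Ht; lra) ltac:(unfold Icl in Ht; lra)) as B.
assert (B0 : RInt (E 0) 0 L = 0).
{ rewrite (RInt_ext (E 0) (fun _ => 0)). rewrite RInt_cst; apply Rmult_0_r.
  intros y Hy. unfold Rmin, Rmax in Hy; destruct Rle_dec in Hy; try lra.
  unfold E. rewrite (proj1 (Init y ltac:(unfold Icl; lra))).
  destruct (phi_facts (m0 y)) as [_ [_ [_ [_ [_ [_ P]]]]]]. rewrite P. apply Rmult_0_r.
  apply Hm0; unfold Icl; lra. }
assert (B1 : RInt (fun t => RInt (Sg t) 0 L) 0 t <= 0).
{ eapply Rle_trans. apply (iter_le T L Sg (fun _ _ => 0)); auto. apply CC_const.
  lra. unfold Icl in Ht; lra. unfold Icl in Ht; lra.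
  right. rewrite (RInt_ext _ (fun _ => 0)). rewrite RInt_cst; apply Rmult_0_r.
  intros; simpl; rewrite RInt_cst; apply Rmult_0_r. }
assert (B2 : RInt (E t) 0 L <= 0) by lra.
assert (Z : E t x = 0).
{ apply (int_zero_pos L (E t) HL).
  - apply (UC_sec_x T L E t); auto. apply CC_UC; auto.
  - intros y Hy. unfold E. apply Rmult_le_pos. left; apply exp_pos. apply (proj1 (phi_facts _)).
  - exact B2.
  - exact Hx. }
unfold E in Z. apply Rmult_integral in Z. destruct Z as [Z|Z].
- pose proof (exp_pos (- K * t)). lra.
- destruct (phi_facts (m t x)) as [_ [_ [_ [_ [_ [P _]]]]]]. apply P; auto.
Qed.

Lemma upos : forall t x, Icl T t -> Icl L x -> 0 <= u t x.
Proof.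
set (E := fun t x => phi (u t x)).
set (Et := fun t x => phi1 (u t x) * ut t x).
set (F := fun t x => - (sigma ^ 2 / 2) * (phi1 (u t x) * ux t x)).
set (Sg := fun t x => sigma ^ 2 / 2 * phi2 (u t x) * ux t x ^ 2 + phi1 (u t x) * (r * u t x - G t x ^ 2)).
assert (CCE : CC T L E) by (unfold E; apply CCcomp; [apply cphi| apply CCu]).
assert (CCF : CC T L F).
{ unfold F. apply (CC_mult T L (fun _ _ => - (sigma ^ 2 / 2)) (fun t x => phi1 (u t x) * ux t x)).
  apply CC_const. apply (CC_mult T L (fun t x => phi1 (u t x)) ux). apply CCcomp. apply cphi1. apply CCu. apply CCux. }
assert (CCS : CC T L Sg).
{ unfold Sg. apply (CC_plus T L (fun t x => sigma ^ 2 / 2 * phi2 (u t x) * ux t x ^ 2)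
      (fun t x => phi1 (u t x) * (r * u t x - G t x ^ 2))).
  - apply (CC_mult T L (fun t x => sigma ^ 2 / 2 * phi2 (u t x)) (fun t x => ux t x ^ 2)).
    apply (CC_mult T L (fun _ _ => sigma ^ 2 / 2) (fun t x => phi2 (u t x))). apply CC_const.
    apply CCcomp. apply cphi2. apply CCu.
    apply (CCcomp (fun s => s ^ 2)). intros; apply (deriv_cont _ _ _ (is_derive_pow _ 2 s 1 (is_derive_id (K := R_AbsRing) s))). apply CCux.
  - apply (CC_mult T L (fun t x => phi1 (u t x)) (fun t x => r * u t x - G t x ^ 2)).
    apply CCcomp. apply cphi1. apply CCu.
    apply (CC_minus T L (fun t x => r * u t x) (fun t x => G t x ^ 2)).
    apply (CC_mult T L (fun _ _ => r) u). apply CC_const. apply CCu.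
    apply (CCcomp (fun s => s ^ 2)). intros; apply (deriv_cont _ _ _ (is_derive_pow _ 2 s 1 (is_derive_id (K := R_AbsRing) s))). apply CCG. }
assert (HEt : forall t x, Rop T L (t, x) -> continuity_2d_pt Et t x).
{ intros t x Hr0. unfold Et. apply (continuity_2d_pt_mult (fun t x => phi1 (u t x)) ut).
  apply (CC_pt T L (fun t x => phi1 (u t x))); auto. apply CCcomp. apply cphi1. apply CCu.
  apply (contop_pt T L); auto. }
assert (HdE : forall t x, Iop T t -> Iop L x -> is_derive (fun s => E s x) t (Et t x)).
{ intros t x Ht Hx. unfold E, Et. apply (dcomp phi (fun s => u s x)). apply dphi. apply (Dt t x Ht Hx). }
assert (HdF : forall t x, Iop T t -> Iop L x -> is_derive (fun y => F t y) x (Et t x - Sg t x)).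
{ intros t x Ht Hx. unfold F, Et, Sg.
  apply dvalue with (- (sigma ^ 2 / 2) * ((phi2 (u t x) * ux t x) * ux t x + phi1 (u t x) * uxx t x)).
  2:{ pose proof (EqU t x Ht Hx). replace (ut t x) with (- (sigma ^ 2 / 2 * uxx t x) + r * u t x - G t x ^ 2) by lra.
      ring. }
  apply dscal. apply (dmult (fun y => phi1 (u t y)) (fun y => ux t y)).
  apply (dcomp phi1 (fun y => u t y)). apply dphi1. apply (Dx t x); auto. unfold Icl, Iop in *; lra.
  apply (Dt t x Ht Hx). }
assert (HF0 : forall t, Icl T t -> F t 0 = 0 /\ F t L = 0).
{ intros t Ht. unfold F. destruct (Neu t Ht) as [H1 H2]. rewrite H1, H2. split; ring. }
assert (Spos : forall t x, Icl T t -> Icl L x -> 0 <= Sg t x).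
{ intros t x Ht Hx. unfold Sg.
  destruct (phi_facts (u t x)) as [P0 [P2 [P1 [P4 _]]]].
  assert (0 <= sigma ^ 2 / 2 * phi2 (u t x) * ux t x ^ 2).
  { apply Rmult_le_pos. apply Rmult_le_pos. assert (0 < sigma ^ 2) by (apply pow_lt; lra). lra. auto. apply pow2_ge_0. }
  assert (0 <= - phi1 (u t x) * G t x ^ 2) by (apply Rmult_le_pos; [lra| apply pow2_ge_0]).
  assert (0 <= r * (phi1 (u t x) * u t x)) by (apply Rmult_le_pos; lra).
  nra. }
intros t x Ht Hx.
pose proof (balance T L E Et F Sg HT HL CCE CCF CCS HEt HdE HdF HF0 t T
   ltac:(unfold Icl in Ht; lra) ltac:(unfold Icl in Ht; lra) ltac:(lra)) as B.
assert (B0 : RInt (E T) 0 L = 0).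
{ rewrite (RInt_ext (E T) (fun _ => 0)). rewrite RInt_cst; apply Rmult_0_r.
  intros y Hy. unfold Rmin, Rmax in Hy; destruct Rle_dec in Hy; try lra.
  unfold E. rewrite (proj2 (Init y ltac:(unfold Icl; lra))).
  destruct (phi_facts (uT y)) as [_ [_ [_ [_ [_ [_ P]]]]]]. apply P.
  apply HuT; unfold Icl; lra. }
assert (B1 : 0 <= RInt (fun t => RInt (Sg t) 0 L) t T).
{ eapply Rle_trans; [| apply (iter_le T L (fun _ _ => 0) Sg); auto].
  right. rewrite (RInt_ext _ (fun _ => 0)). rewrite RInt_cst. symmetry; apply Rmult_0_r.
  intros; simpl; rewrite RInt_cst; apply Rmult_0_r.
  apply CC_const. unfold Icl in Ht; lra. unfold Icl in Ht; lra. lra. }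
assert (B2 : RInt (E t) 0 L <= 0) by lra.
assert (Z : E t x = 0).
{ apply (int_zero_pos L (E t) HL).
  - apply (UC_sec_x T L E t); auto. apply CC_UC; auto.
  - intros y Hy. unfold E. apply (proj1 (phi_facts _)).
  - exact B2.
  - exact Hx. }
unfold E in Z. destruct (phi_facts (u t x)) as [_ [_ [_ [_ [_ [P _]]]]]]. apply P; auto.
Qed.

Lemma CCsq f : CC T L f -> CC T L (fun t x => f t x ^ 2).
Proof.
intros. apply (CCcomp (fun s => s ^ 2)); auto.
intros; apply (deriv_cont _ _ _ (is_derive_pow _ 2 s 1 (is_derive_id (K := R_AbsRing) s))).
Qed.

Lemma CCY : CC T L (fun t x => G t x ^ 2 * m t x).
Proof. apply (CC_mult T L (fun t x => G t x ^ 2) m). apply CCsq, CCG. apply CCm. Qed.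

Lemma mass1 t : Icl T t -> RInt (m t) 0 L = 1.
Proof. intros; rewrite mass; auto. Qed.

Lemma Qbound A : (b + c * A) * (/ 2 * (b + c * A - A)) <= b / (8 * c).
Proof.
apply (Rmult_le_reg_r (8 * c)); [lra|].
replace (b / (8 * c) * (8 * c)) with b by (field; lra).
assert (Hid : b - (b + c * A) * (/ 2 * (b + c * A - A)) * (8 * c) = b * (1 - 2 * (b + c * A)) ^ 2).
{ replace b with (1 - c) by lra. field. }
assert (0 <= b * (1 - 2 * (b + c * A)) ^ 2) by (apply Rmult_le_pos; [lra| apply pow2_ge_0]).
lra.
Qed.

Lemma dual MT : (forall x, Icl L x -> uT x <= MT) ->
  RInt (fun t => RInt (fun x => G t x ^ 2 * m t x) 0 L) 0 T <= MT + T * (b / (8 * c)).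
Proof.
intros HMT.
set (E := fun t x => u t x * m t x).
set (Et := fun t x => ut t x * m t x + u t x * mt t x).
set (F := fun t x => u t x * Flux t x - sigma ^ 2 / 2 * (ux t x * m t x)).
set (Sg := fun t x => r * (u t x * m t x) - G t x ^ 2 * m t x - ux t x * (G t x * m t x)).
assert (CCE : CC T L E) by (apply CC_mult; [apply CCu| apply CCm]).
assert (CCGm : CC T L (fun t x => G t x * m t x)) by (apply (CC_mult T L G m); [apply CCG| apply CCm]).
assert (CCuxm : CC T L (fun t x => ux t x * m t x)) by (apply CC_mult; [apply CCux| apply CCm]).
assert (CCF : CC T L F).
{ unfold F. apply (CC_minus T L (fun t x => u t x * Flux t x) (fun t x => sigma ^ 2 / 2 * (ux t x * m t x))).
  apply CC_mult. apply CCu. apply CCFlux.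
  apply (CC_mult T L (fun _ _ => sigma ^ 2 / 2) (fun t x => ux t x * m t x)). apply CC_const. auto. }
assert (CCS : CC T L Sg).
{ unfold Sg. apply (CC_minus T L (fun t x => r * (u t x * m t x) - G t x ^ 2 * m t x) (fun t x => ux t x * (G t x * m t x))).
  apply (CC_minus T L (fun t x => r * (u t x * m t x)) (fun t x => G t x ^ 2 * m t x)).
  apply (CC_mult T L (fun _ _ => r) E). apply CC_const. auto. apply CCY.
  apply (CC_mult T L ux (fun t x => G t x * m t x)). apply CCux. auto. }
assert (HEt : forall t x, Rop T L (t, x) -> continuity_2d_pt Et t x).
{ intros t x Hr0. unfold Et. apply (continuity_2d_pt_plus (fun t x => ut t x * m t x) (fun t x => u t x * mt t x)).
  apply (continuity_2d_pt_mult ut m). apply (contop_pt T L); auto. apply (CC_pt T L); auto. apply CCm.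
  apply (continuity_2d_pt_mult u mt). apply (CC_pt T L); auto. apply CCu. apply (contop_pt T L); auto. }
assert (HdE : forall t x, Iop T t -> Iop L x -> is_derive (fun s => E s x) t (Et t x)).
{ intros t x Ht Hx. unfold E, Et. apply (dmult (fun s => u s x) (fun s => m s x)); apply (Dt t x Ht Hx). }
assert (HdF : forall t x, Iop T t -> Iop L x -> is_derive (fun y => F t y) x (Et t x - Sg t x)).
{ intros t x Ht Hx. unfold F, Et, Sg.
  apply dvalue with ((ux t x * Flux t x + u t x * mt t x) - sigma ^ 2 / 2 * (uxx t x * m t x + ux t x * mx t x)).
  2:{ pose proof (EqU t x Ht Hx). replace (ut t x) with (- (sigma ^ 2 / 2 * uxx t x) + r * u t x - G t x ^ 2) by lra.
      unfold Flux. ring. }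
  assert (Hx' : Icl T t) by (unfold Icl, Iop in *; lra).
  apply (dminus (fun y => u t y * Flux t y) (fun y => sigma ^ 2 / 2 * (ux t y * m t y))).
  apply (dmult (fun y => u t y) (fun y => Flux t y)). apply (Dx t x Hx' Hx). apply dFlux; auto.
  apply dscal. apply (dmult (fun y => ux t y) (fun y => m t y)). apply (Dt t x Ht Hx). apply (Dx t x Hx' Hx). }
assert (HF0 : forall t, Icl T t -> F t 0 = 0 /\ F t L = 0).
{ intros t Ht. unfold F. destruct (Neu t Ht) as [H1 H2]. destruct (Flux0 t Ht) as [H3 H4].
  rewrite H1, H2, H3, H4. split; ring. }
pose proof (balance T L E Et F Sg HT HL CCE CCF CCS HEt HdE HdF HF0 0 T ltac:(lra) ltac:(lra) ltac:(lra)) as B.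
assert (BT : RInt (E T) 0 L <= MT).
{ rewrite <- (Rmult_1_r MT). rewrite <- (mass1 T) by (unfold Icl; lra).
  apply Rle_trans with (RInt (fun x => MT * m T x) 0 L).
  apply RInt_le; try lra. apply (inner_ex T L E); auto; unfold Icl; lra.
  apply (ex_RInt_scal (V := R_NormedModule) (m T) 0 L MT). apply (inner_ex T L m); auto. apply CCm. unfold Icl; lra.
  intros x Hx. unfold E. rewrite (proj2 (Init x ltac:(unfold Icl; lra))).
  apply Rmult_le_compat_r. apply mpos; unfold Icl; lra. apply HMT; unfold Icl; lra.
  right. pose proof (RInt_scal (V := R_CompleteNormedModule) (m T) 0 L MT) as Hs.
  apply Hs. apply (inner_ex T L m); auto. apply CCm. unfold Icl; lra. }
assert (B0 : 0 <= RInt (E 0) 0 L).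
{ apply RInt_ge_0; try lra. apply (inner_ex T L E); auto; unfold Icl; lra.
  intros x Hx. unfold E. apply Rmult_le_pos. apply upos; unfold Icl; lra. apply mpos; unfold Icl; lra. }
assert (Inn : forall t, Icl T t -> RInt (fun x => G t x ^ 2 * m t x) 0 L <= RInt (Sg t) 0 L + b / (8 * c)).
{ intros t Ht.
  set (A := RInt (fun y => ux t y * m t y) 0 L).
  apply Rle_trans with (RInt (fun x => (b + c * A) * (G t x * m t x) + Sg t x) 0 L).
  - apply RInt_le; try lra. apply (inner_ex T L (fun t x => G t x ^ 2 * m t x)); auto. apply CCY.
    apply (ex_RInt_plus (V := R_NormedModule)).
    apply (ex_RInt_scal (V := R_NormedModule) (fun x => G t x * m t x) 0 L (b + c * A)).
    apply (inner_ex T L (fun t x => G t x * m t x)); auto.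
    apply (inner_ex T L Sg); auto.
    intros x Hx. unfold Sg.
    assert (Hux : ux t x = b + c * A - 2 * G t x) by (unfold Gfun, A; field).
    rewrite Hux.
    assert (0 <= r * (u t x * m t x)).
    { apply Rmult_le_pos; [lra|]. apply Rmult_le_pos; [apply upos| apply mpos]; unfold Icl in *; lra. }
    lra.
  - rewrite (inner_lin T L (fun t x => G t x * m t x) Sg (b + c * A)); auto.
    assert (HGm : RInt (fun x => G t x * m t x) 0 L = / 2 * (b + c * A - A)).
    { rewrite (RInt_ext (fun x => G t x * m t x) (fun x => (/ 2 * (b + c * A)) * m t x + (- / 2) * (ux t x * m t x))).
      2:{ intros x _. unfold Gfun. fold A. simpl. ring. }
      rewrite (inner_lin T L m (fun t x => - / 2 * (ux t x * m t x)) (/ 2 * (b + c * A))); auto.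
      2:{ apply CCm. }
      2:{ apply (CC_mult T L (fun _ _ => - / 2) (fun t x => ux t x * m t x)). apply CC_const. auto. }
      rewrite mass1 by auto.
      rewrite (RInt_ext (fun x => - / 2 * (ux t x * m t x)) (fun x => - / 2 * (ux t x * m t x) + 0)) by (intros; simpl; ring).
      rewrite (inner_lin T L (fun t x => ux t x * m t x) (fun _ _ => 0) (- / 2)); auto.
      2:{ apply CC_const. }
      rewrite RInt_cst. fold A. match goal with |- ?x = ?y => change (@eq R x y) end. field. }
    rewrite HGm. pose proof (Qbound A). lra. }
apply Rle_trans with (RInt (fun t => RInt (Sg t) 0 L + b / (8 * c)) 0 T).
- apply RInt_le; try lra. apply (iter_ex T L); auto; try lra. apply CCY.
  apply (ex_RInt_plus (V := R_NormedModule)). apply (iter_ex T L); auto; lra. apply ex_RInt_const.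
  intros t Ht. apply Inn. unfold Icl; lra.
- rewrite (RInt_plus (V := R_CompleteNormedModule) (fun t => RInt (Sg t) 0 L) (fun _ => b / (8 * c))).
  2:{ apply (iter_ex T L); auto; lra. }
  2:{ apply ex_RInt_const. }
  change (RInt (fun t => RInt (Sg t) 0 L) 0 T + RInt (fun _ => b / (8 * c)) 0 T <= MT + T * (b / (8 * c))).
  rewrite RInt_cst. rewrite <- B. lra.
Qed.

Lemma CCPsi (p : R -> R) : (forall s, -1 < s -> continuity_pt p s) -> CC T L (fun t x => p (m t x)).
Proof.
intros Hp. apply CC_comp; try lra. intros t x Ht Hx. apply Hp. pose proof (mpos t x Ht Hx). lra.
apply CCm.
Qed.

Lemma entropy MT : (forall x, Icl L x -> uT x <= MT) -> sigma <= 1 ->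
  sigma ^ 4 / 4 * RInt (fun t => RInt (fun x => mx t x ^ 2 / (m t x + 1)) 0 L) 0 T <=
  Rabs (RInt (fun x => Psi (m0 x)) 0 L) + (MT + T * (b / (8 * c))).
Proof.
intros HMT Hs1.
set (E := fun t x => Psi (m t x)).
set (Et := fun t x => Psi1 (m t x) * mt t x).
set (F := fun t x => Psi1 (m t x) * Flux t x).
set (Sg := fun t x => - (Psi2 (m t x) * mx t x) * Flux t x).
set (Xf := fun t x => mx t x ^ 2 / (m t x + 1)).
set (Yf := fun t x => G t x ^ 2 * m t x).
assert (CCE : CC T L E) by (apply CCPsi; apply cPsi).
assert (CCF : CC T L F) by (apply (CC_mult T L (fun t x => Psi1 (m t x)) Flux); [apply CCPsi; apply cPsi1| apply CCFlux]).
assert (CCS : CC T L Sg).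
{ apply (CC_mult T L (fun t x => - (Psi2 (m t x) * mx t x)) Flux); [|apply CCFlux].
  apply (CC_ext T L (fun t x => -1 * (Psi2 (m t x) * mx t x))); try lra. intros; ring.
  apply (CC_mult T L (fun _ _ => - 1) (fun t x => Psi2 (m t x) * mx t x)). apply CC_const.
  apply (CC_mult T L (fun t x => Psi2 (m t x)) mx). apply CCPsi; apply cPsi2. apply CCmx. }
assert (CCX : CC T L Xf).
{ apply (CC_mult T L (fun t x => mx t x ^ 2) (fun t x => Psi2 (m t x))). apply CCsq, CCmx. apply CCPsi; apply cPsi2. }
assert (CCYf : CC T L Yf) by apply CCY.
assert (HEt : forall t x, Rop T L (t, x) -> continuity_2d_pt Et t x).
{ intros t x Hr0. unfold Et. apply (continuity_2d_pt_mult (fun t x => Psi1 (m t x)) mt).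
  apply (CC_pt T L (fun t x => Psi1 (m t x))); auto. apply CCPsi; apply cPsi1.
  apply (contop_pt T L); auto. }
assert (Hmp : forall t x, Iop T t -> Iop L x -> -1 < m t x).
{ intros t x Ht Hx. pose proof (mpos t x ltac:(unfold Icl, Iop in *; lra) ltac:(unfold Icl, Iop in *; lra)). lra. }
assert (HdE : forall t x, Iop T t -> Iop L x -> is_derive (fun s => E s x) t (Et t x)).
{ intros t x Ht Hx. unfold E, Et. apply (dcomp Psi (fun s => m s x)). apply dPsi; auto. apply (Dt t x Ht Hx). }
assert (HdF : forall t x, Iop T t -> Iop L x -> is_derive (fun y => F t y) x (Et t x - Sg t x)).
{ intros t x Ht Hx. unfold F, Et, Sg.
  apply dvalue with ((Psi2 (m t x) * mx t x) * Flux t x + Psi1 (m t x) * mt t x); [|ring].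
  apply (dmult (fun y => Psi1 (m t y)) (fun y => Flux t y)).
  apply (dcomp Psi1 (fun y => m t y)). apply dPsi1; auto. apply (Dx t x); auto. unfold Icl, Iop in *; lra.
  apply dFlux; auto. }
assert (HF0 : forall t, Icl T t -> F t 0 = 0 /\ F t L = 0).
{ intros t Ht. unfold F. destruct (Flux0 t Ht) as [H3 H4]. rewrite H3, H4. split; ring. }
pose proof (balance T L E Et F Sg HT HL CCE CCF CCS HEt HdE HdF HF0 0 T ltac:(lra) ltac:(lra) ltac:(lra)) as B.
assert (Hs2 : 0 < sigma ^ 2) by (apply pow_lt; lra).
assert (Hs2' : sigma ^ 2 <= 1) by (rewrite <- (pow1 2); apply pow_incr; lra).
assert (Pw : forall t x, Icl T t -> Icl L x -> sigma ^ 4 / 4 * Xf t x <= - sigma ^ 2 * Sg t x + Yf t x).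
{ intros t x Ht Hx. unfold Xf, Sg, Yf, Flux, Psi2.
  pose proof (mpos t x Ht Hx) as Hm.
  set (w := mx t x) in *. set (mm := m t x) in *. set (g := G t x) in *.
  apply (Rmult_le_reg_r (mm + 1)); [lra|].
  replace (sigma ^ 4 / 4 * (w ^ 2 / (mm + 1)) * (mm + 1)) with (sigma ^ 4 / 4 * w ^ 2) by (field; lra).
  replace ((- sigma ^ 2 * (- (/ (mm + 1) * w) * (sigma ^ 2 / 2 * w + g * mm)) + g ^ 2 * mm) * (mm + 1))
    with (sigma ^ 2 * w * (sigma ^ 2 / 2 * w + g * mm) + g ^ 2 * mm * (mm + 1)) by (field; lra).
  assert (0 <= (sigma ^ 2 / 2 * w + g * mm) ^ 2) by apply pow2_ge_0.
  assert (0 <= g ^ 2 * mm) by (apply Rmult_le_pos; [apply pow2_ge_0| lra]).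
  replace (sigma ^ 4) with (sigma ^ 2 * sigma ^ 2) by ring.
  nra. }
assert (I1 : RInt (fun t => RInt (fun x => sigma ^ 4 / 4 * Xf t x + 0) 0 L) 0 T <=
             RInt (fun t => RInt (fun x => - sigma ^ 2 * Sg t x + Yf t x) 0 L) 0 T).
{ apply (iter_le T L (fun t x => sigma ^ 4 / 4 * Xf t x + 0) (fun t x => - sigma ^ 2 * Sg t x + Yf t x)); auto; try lra.
  apply (CC_plus T L (fun t x => sigma ^ 4 / 4 * Xf t x) (fun _ _ => 0)). apply CC_mult. apply CC_const. auto. apply CC_const.
  apply (CC_plus T L (fun t x => - sigma ^ 2 * Sg t x) Yf). apply CC_mult. apply CC_const. auto. auto.
  intros; rewrite Rplus_0_r; apply Pw; auto. }
rewrite (iter_lin T L Xf (fun _ _ => 0)) in I1; auto; try lra; [|apply CC_const].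
rewrite (iter_lin T L Sg Yf) in I1; auto; try lra.
rewrite (RInt_ext (fun t => RInt (fun _ => 0) 0 L) (fun _ => 0)) in I1.
2:{ intros; rewrite RInt_cst; apply Rmult_0_r. }
rewrite RInt_cst, Rmult_0_r, Rplus_0_r in I1.
rewrite <- B in I1.
pose proof (dual MT HMT) as D. fold Yf in D.
assert (P0 : 0 <= RInt (E T) 0 L).
{ apply RInt_ge_0; try lra. apply (inner_ex T L E); auto; unfold Icl; lra.
  intros x Hx. unfold E. apply Psi_nonneg. apply mpos; unfold Icl; lra. }
assert (PE : RInt (E 0) 0 L = RInt (fun x => Psi (m0 x)) 0 L).
{ apply RInt_ext. intros x Hx. unfold E. rewrite (proj1 (Init x ltac:(unfold Icl; unfold Rmin, Rmax in Hx; destruct Rle_dec in Hx; lra))). reflexivity. }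
rewrite PE in I1.
set (E0 := RInt (fun x => Psi (m0 x)) 0 L) in *.
assert (- sigma ^ 2 * (RInt (E T) 0 L - E0) <= Rabs E0).
{ assert (E0 <= Rabs E0) by apply Rle_abs. assert (- E0 <= Rabs E0) by (rewrite <- Rabs_Ropp; apply Rle_abs).
  assert (0 <= Rabs E0) by apply Rabs_pos.
  assert (sigma ^ 2 * RInt (E T) 0 L >= 0) by nra. nra. }
unfold Xf, Yf in I1. cbv beta in I1. lra.
Qed.

Lemma final_bound MT : (forall x, Icl L x -> uT x <= MT) -> sigma <= 1 ->
  sigma ^ 2 * sqrt (RInt (fun t => RInt (fun x => mx t x ^ 2 / (m t x + 1)) 0 L) 0 T) <=
  sqrt (4 * (Rabs (RInt (fun x => Psi (m0 x)) 0 L) + (MT + T * (b / (8 * c))))).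
Proof.
intros HMT Hs1.
pose proof (entropy MT HMT Hs1) as En.
set (X := RInt (fun t => RInt (fun x => mx t x ^ 2 / (m t x + 1)) 0 L) 0 T) in *.
set (K := Rabs (RInt (fun x => Psi (m0 x)) 0 L) + (MT + T * (b / (8 * c)))) in *.
assert (HX : 0 <= X).
{ unfold X. apply RInt_ge_0; try lra.
  apply (iter_ex T L (fun t x => mx t x ^ 2 / (m t x + 1))); auto; try lra.
  apply (CC_mult T L (fun t x => mx t x ^ 2) (fun t x => Psi2 (m t x))). apply CCsq, CCmx. apply CCPsi; apply cPsi2.
  intros t Ht. apply RInt_ge_0; try lra.
  apply (inner_ex T L (fun t x => mx t x ^ 2 / (m t x + 1))); auto; [|unfold Icl; lra].
  apply (CC_mult T L (fun t x => mx t x ^ 2) (fun t x => Psi2 (m t x))). apply CCsq, CCmx. apply CCPsi; apply cPsi2.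
  intros x Hx. pose proof (mpos t x ltac:(unfold Icl; lra) ltac:(unfold Icl; lra)).
  apply Rmult_le_pos. apply pow2_ge_0. left; apply Rinv_0_lt_compat; lra. }
assert (Hs2 : 0 <= sigma ^ 2) by (apply pow_le; lra).
replace (sigma ^ 2) with (sqrt (sigma ^ 2 * sigma ^ 2)) at 1.
2:{ rewrite sqrt_square; auto. }
rewrite <- sqrt_mult_alt by (apply Rmult_le_pos; auto).
apply sqrt_le_1_alt.
replace (sigma ^ 4) with (sigma ^ 2 * sigma ^ 2) in En by ring.
lra.
Qed.

End Sol.


Theorem lemma4p5 :
  forall (L T r eps gamma : R) (uT uT1 uT2 m01 m02 m0 : R -> R),
    0 < L -> 0 < T -> 0 < r -> 0 < eps -> 0 < gamma ->
    C2g L gamma uT uT1 uT2 -> C2g L gamma m0 m01 m02 ->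
    uT1 0 = 0 -> uT1 L = 0 ->
    m0 0 = 0 -> m01 0 = 0 -> m0 L = 0 -> m01 L = 0 ->
    (forall x, Icl L x -> 0 <= m0 x) -> RInt m0 0 L = 1 ->
    (forall x, Icl L x -> 0 <= uT x) ->
    let b := 2 / (2 + eps) in
    let c := eps / (2 + eps) in
    exists C : R,
      forall (sigma : R) (u ut ux uxx m mt mx mxx : R -> R -> R),
        0 < sigma <= 1 ->
        classical_solution sigma r b c T L uT m0 u ut ux uxx m mt mx mxx ->
        sigma ^ 2 * sqrt (RInt (fun t => RInt (fun x => (mx t x) ^ 2 / (m t x + 1)) 0 L) 0 T)
          <= C.
Proof.
intros L T r eps gamma uT uT1 uT2 m01 m02 m0 HL HT Hr Heps Hg CuT Cm0 HuT10 HuT1L Hm00 Hm010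
  Hm0L Hm01L Hm0pos Hm0int HuTpos b c.
destruct CuT as [CuT _].
destruct (UC1_bound L uT HL (cont1_UC1 L uT HL CuT)) as [MT HMT].
exists (sqrt (4 * (Rabs (RInt (fun x => Psi (m0 x)) 0 L) + (MT + T * (b / (8 * c)))))).
intros sigma u ut ux uxx m mt mx mxx [Hs0 Hs1] Hsol.
destruct Hsol as (Cu & Cm & Cux & Cmx & Cut & Cuxx & Cmt & Cmxx & Dx & Dt & EqU & EqM & Init & Neu & NoF).
assert (Hbc : b + c = 1) by (unfold b, c; field; lra).
assert (Hc : 0 < c) by (unfold c; apply Rdiv_lt_0_compat; lra).
assert (Hb : 0 < b) by (unfold b; apply Rdiv_lt_0_compat; lra).
apply (final_bound L T r sigma b c uT m0 u ut ux uxx m mt mx mxx HL Hs0 Hm0pos HuTpos Hr Hbc Hc Hb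
  Hm0int HT Cu Cm Cux Cmx Cut Cmt Dx Dt EqU EqM Init Neu NoF MT); auto.
intros x Hx. eapply Rle_trans; [apply Rle_abs| apply HMT; exact Hx].
Qed.
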